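(* Let $p,g_i,S,d,R,\eta_i,\beta,f_\gamma,N,D,p^*$ and $Pol^r_{n',2d'}$ be as in the context. For each positive integer $r$ let $$l_r=\sup\Big\{\gamma\in\mathbb{R} : f_\gamma(z)-\tfrac{1}{r}\big(\textstyle\sum_{i=1}^N z_i^2\big)^D\in Pol^r_{N,2D}\Big\}$$ (with $\sup\emptyset=-\infty$), and let $m_r=\max_{i=1,\dots,r}l_i$. Then $m_r\le p^*$ for all $r$, $\{m_r\}$ is nondecreasing, and $\lim_{r\to\infty}m_r=p^*$.
   Context: Let $p,g_1,\dots,g_m$ be real polynomials in $x=(x_1,\dots,x_n)$ and let $S=\{x\in\mathbb{R}^n : g_i(x)\ge 0,\ i=1,\dots,m\}$. Let $p^*=\inf_{x\in S}p(x)$ (with $p^*=+\infty$ if $S=\emptyset$). Let $d\ge 1$ be the integer such that $2d$ is the smallest even integer larger than or equal to the maximum of the degrees of $p,g_1,\dots,g_m$. Assume there is $R>0$ with $\sum_{i=1}^n x_i^2\le R$ for all $x\in S$. Let $\eta_1,\dots,\eta_m$ be real numbers with $g_i(x)\le\eta_i$ for all $x\in S$, and let $\beta$ be a real number with $-p(x)\le\beta$ for all $x\in S$. For a polynomial $q$ in $x$ of degree at most $2d$, $y^{2d}q(x/y)$ denotes its homogenization to a form of degree $2d$ in $(x,y)$. For $\gamma\in\mathbb{R}$ define the form in the variables $z=(x,s,y)=(x_1,\dots,x_n,s_0,\dots,s_{m+1},y)$: $$f_\gamma(x,s,y)=\big(\gamma y^{2d}-y^{2d}p(x/y)-s_0^2y^{2d-2}\big)^2+\sum_{i=1}^m\big(y^{2d}g_i(x/y)-s_i^2y^{2d-2}\big)^2+\Big(\big(R+\textstyle\sum_{i=1}^m\eta_i+\beta+\gamma\big)^d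 y^{2d}-\big(\sum_{i=1}^n x_i^2+\sum_{i=0}^m s_i^2\big)^d-s_{m+1}^{2d}\Big)^2.$$ Set $N=n+m+3$ and $D=2d$, so $f_\gamma$ is a form of degree $2D$ in $N$ variables. For a form $q$ in $n'$ variables and $v,w\in\mathbb{R}^{n'}$, $q(v^2-w^2)$ denotes $q(v_1^2-w_1^2,\dots,v_{n'}^2-w_{n'}^2)$. For integers $n',d',r\ge1$ define $Pol^r_{n',2d'}$ as the set of forms $q$ of degree $2d'$ in $n'$ variables such that the polynomial $$\Big(q(v^2-w^2)+\tfrac{1}{2r}\Big(\sum_{i=1}^{n'}(v_i^4+w_i^4)\Big)^{d'}\Big)\cdot\Big(\sum_{i=1}^{n'}v_i^2+\sum_{i=1}^{n'}w_i^2\Big)^{r^2}$$ in the variables $(v,w)\in\mathbb{R}^{2n'}$ has all coefficients nonnegative. *)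

(* Defs.v *)
From Stdlib Require Import Reals List Arith ClassicalEpsilon.
Import ListNotations.
Open Scope R_scope.

(* A monomial is an exponent vector: entry i is the exponent of variable i
   (variables are indexed from 0; missing trailing entries mean exponent 0). *)
Definition monom := list nat.

(* A polynomial is a finite formal sum of terms  c * X^alpha . *)
Definition mpoly := list (R * monom).

Definition mexp (a : monom) (i : nat) : nat := nth i a 0%nat.

(* equality of exponent vectors (up to trailing zeros) *)
Definition meq (a b : monom) : bool :=
  forallb (fun i => Nat.eqb (mexp a i) (mexp b i)) (seq 0 (Nat.max (length a) (length b))).

Definition mdeg (a : monom) : nat := list_sum a.

Fixpoint madd (a b : monom) : monom :=
  match a, b with
  | [], _ => b
  | _, [] => a
  | x :: a', y :: b' => (x + y)%nat :: madd a' b'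
  end.

Definition munit (i k : nat) : monom := repeat 0%nat i ++ [k].

Definition coef (P : mpoly) (a : monom) : R :=
  fold_right (fun t acc => if meq a (snd t) then fst t + acc else acc) 0 P.

Definition pconst (c : R) : mpoly := [(c, [])].
Definition pvar (i : nat) : mpoly := [(1, munit i 1)].
Definition padd (P Q : mpoly) : mpoly := P ++ Q.
Definition pscale (c : R) (P : mpoly) : mpoly := map (fun t => (c * fst t, snd t)) P.
Definition psub (P Q : mpoly) : mpoly := padd P (pscale (-1) Q).
Definition pmul (P Q : mpoly) : mpoly :=
  flat_map (fun s => map (fun t => (fst s * fst t, madd (snd s) (snd t))) Q) P.
Fixpoint ppow (P : mpoly) (k : nat) : mpoly :=
  match k with O => pconst 1 | S k' => pmul P (ppow P k') end.
Definition psum (l : list nat) (F : nat -> mpoly) : mpoly :=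
  fold_right (fun i acc => padd (F i) acc) [] l.

Definition psubst (P : mpoly) (sigma : nat -> mpoly) : mpoly :=
  flat_map (fun t =>
     pmul (pconst (fst t))
          (fold_right (fun i acc => pmul (ppow (sigma i) (mexp (snd t) i)) acc)
                      (pconst 1) (seq 0 (length (snd t))))) P.

Definition meval (a : monom) (x : nat -> R) : R :=
  fold_right (fun i acc => x i ^ mexp a i * acc) 1 (seq 0 (length a)).
Definition peval (P : mpoly) (x : nat -> R) : R :=
  fold_right (fun t acc => fst t * meval (snd t) x + acc) 0 P.

(* total degree (the zero polynomial gets degree 0) *)
Definition deg (P : mpoly) : nat :=
  fold_right (fun t acc =>
     if Req_EM_T (coef P (snd t)) 0 then acc else Nat.max (mdeg (snd t)) acc) 0%nat P.

Definition in_vars (n : nat) (P : mpoly) : Prop :=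
  forall a, coef P a <> 0 -> forall i, (n <= i)%nat -> mexp a i = 0%nat.

Definition is_form (n k : nat) (P : mpoly) : Prop :=
  in_vars n P /\ forall a, coef P a <> 0 -> mdeg a = k.

Definition nonneg_coefs (P : mpoly) : Prop := forall a, 0 <= coef P a.

(* homogenization  y^k q(x/y)  where y is the variable of index yi
   (meaningful when deg q <= k) *)
Definition homog (k yi : nat) (q : mpoly) : mpoly :=
  map (fun t => (fst t, madd (snd t) (munit yi (k - mdeg (snd t))))) q.

(* variables v_i = X_i (i < n'), w_i = X_{n'+i} (i < n') *)
Definition Pol (r n' d' : nat) (q : mpoly) : Prop :=
  is_form n' (2 * d') q /\
  nonneg_coefs
    (pmul
       (padd (psubst q (fun i => psub (ppow (pvar i) 2) (ppow (pvar (n' + i)) 2)))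
             (pscale (1 / (2 * INR r))
                (ppow (psum (seq 0 n') (fun i => padd (ppow (pvar i) 4)
                                                      (ppow (pvar (n' + i)) 4))) d')))
       (ppow (padd (psum (seq 0 n') (fun i => ppow (pvar i) 2))
                   (psum (seq 0 n') (fun i => ppow (pvar (n' + i)) 2))) (r * r))).

Inductive ER := Fin (x : R) | PInf | MInf.

Definition ER_le (a b : ER) : Prop :=
  match a, b with
  | MInf, _ => True
  | _, PInf => True
  | Fin x, Fin y => x <= y
  | _, _ => False
  end.

Definition ER_max (a b : ER) : ER :=
  match a, b with
  | MInf, _ => b
  | _, MInf => a
  | PInf, _ => PInf
  | _, PInf => PInf
  | Fin x, Fin y => Fin (Rmax x y)
  end.

Definition ER_opp (a : ER) : ER :=
  match a with Fin x => Fin (- x) | PInf => MInf | MInf => PInf end.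

Definition ER_sup (E : R -> Prop) : ER :=
  match excluded_middle_informative (exists x, E x) with
  | right _ => MInf
  | left ne =>
      match excluded_middle_informative (bound E) with
      | left b => Fin (proj1_sig (completeness E b ne))
      | right _ => PInf
      end
  end.

(* infimum in the extended reals; inf of the empty set is +infinity *)
Definition ER_inf (E : R -> Prop) : ER := ER_opp (ER_sup (fun x => E (- x))).

Definition ER_cv (u : nat -> ER) (l : ER) : Prop :=
  match l with
  | Fin a => forall eps, 0 < eps -> exists N, forall k, (N <= k)%nat ->
               exists x, u k = Fin x /\ Rabs (x - a) < eps
  | PInf => forall M, exists N, forall k, (N <= k)%nat -> ER_le (Fin M) (u k) /\ u k <> Fin M
  | MInf => forall M, exists N, forall k, (N <= k)%nat -> ER_le (u k) (Fin M) /\ u k <> Fin M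
  end.

(* p, g_1, ..., g_m : polynomials in x = (X_0, ..., X_{n-1}) *)

Definition in_S (g : nat -> mpoly) (m : nat) (x : nat -> R) : Prop :=
  forall i, (1 <= i <= m)%nat -> 0 <= peval (g i) x.

Definition pstar (p : mpoly) (g : nat -> mpoly) (m : nat) : ER :=
  ER_inf (fun v => exists x, in_S g m x /\ v = peval p x).

Definition max_deg (p : mpoly) (g : nat -> mpoly) (m : nat) : nat :=
  fold_right (fun i acc => Nat.max (deg (g i)) acc) (deg p) (seq 1 m).

(* d >= 1 and 2d is the smallest even integer >= max_deg
   (with the convention d = 1 when max_deg <= 2) *)
Definition d_spec (d maxdeg : nat) : Prop :=
  (1 <= d)%nat /\ (maxdeg <= 2 * d)%nat /\ (d = 1%nat \/ (2 * d - 2 < maxdeg)%nat).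

Definition sumR (l : list nat) (F : nat -> R) : R :=
  fold_right (fun i acc => F i + acc) 0 l.

(* Variables of f_gamma: z = (x_1..x_n, s_0..s_{m+1}, y) encoded as
   x_i = X_{i-1}, s_j = X_{n+j}, y = X_{n+m+2}; N = n+m+3. *)
Definition f_gamma (n m d : nat) (Rad : R) (eta : nat -> R) (beta : R)
  (p : mpoly) (g : nat -> mpoly) (gamma : R) : mpoly :=
  let y := pvar (n + m + 2) in
  let s := fun j => pvar (n + j) in
  let h := fun q => homog (2 * d) (n + m + 2) q in
  padd
    (ppow (psub (psub (pmul (pconst gamma) (ppow y (2 * d))) (h p))
                (pmul (ppow (s 0%nat) 2) (ppow y (2 * d - 2)))) 2)
  (padd
    (psum (seq 1 m) (fun i =>
       ppow (psub (h (g i)) (pmul (ppow (s i) 2) (ppow y (2 * d - 2)))) 2))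
    (ppow (psub (psub
         (pmul (pconst ((Rad + sumR (seq 1 m) eta + beta + gamma) ^ d)) (ppow y (2 * d)))
         (ppow (padd (psum (seq 0 n) (fun i => ppow (pvar i) 2))
                     (psum (seq 0 (m + 1)) (fun j => ppow (s j) 2))) d))
         (ppow (s (m + 1)%nat) (2 * d))) 2)).

Definition l_seq (n m d : nat) (Rad : R) (eta : nat -> R) (beta : R)
  (p : mpoly) (g : nat -> mpoly) (r : nat) : ER :=
  let N := (n + m + 3)%nat in
  let D := (2 * d)%nat in
  ER_sup (fun gamma =>
    Pol r N D (psub (f_gamma n m d Rad eta beta p g gamma)
                    (pscale (1 / INR r)
                       (ppow (psum (seq 0 N) (fun i => ppow (pvar i) 2)) D)))).

(* m_r = max_{i=1..r} l_i  (m_0 = -infinity, unused) *)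
Fixpoint m_seq (l : nat -> ER) (r : nat) : ER :=
  match r with O => MInf | S r' => ER_max (m_seq l r') (l r) end.

(* Main.v *)
Require Import Defs.
From Stdlib Require Import Reals Rtopology List Arith Lia Lra Psatz Classical ClassicalEpsilon FunctionalExtensionality.
Import ListNotations.
Open Scope R_scope.

Definition W (phi : monom -> R) (P : mpoly) : R :=
  fold_right (fun t acc => fst t * phi (snd t) + acc) 0 P.

Definition minv (phi : monom -> R) : Prop := forall a b, meq a b = true -> phi a = phi b.

Lemma mexp_over a i : (length a <= i)%nat -> mexp a i = 0%nat.
Proof. intros; unfold mexp; apply nth_overflow; auto. Qed.

Lemma meq_spec a b : meq a b = true <-> forall i, mexp a i = mexp b i.
Proof.
  unfold meq; rewrite forallb_forall; split.
  - intros H i. destruct (lt_dec i (Nat.max (length a) (length b))).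
    + apply Nat.eqb_eq, H, in_seq; lia.
    + rewrite !mexp_over by lia; auto.
  - intros H x _; apply Nat.eqb_eq, H.
Qed.

Lemma meq_refl a : meq a a = true.
Proof. apply meq_spec; auto. Qed.
Lemma meq_sym a b : meq a b = meq b a.
Proof.
  destruct (meq a b) eqn:E1; destruct (meq b a) eqn:E2; auto.
  - rewrite meq_spec in E1. rewrite <- E2. symmetry; apply meq_spec; intros; auto.
  - rewrite meq_spec in E2. rewrite <- E1; apply meq_spec; intros; auto.
Qed.
Lemma meq_trans a b c : meq a b = true -> meq b c = true -> meq a c = true.
Proof. rewrite !meq_spec; intros H1 H2 i; rewrite H1; auto. Qed.

Lemma W_app phi P Q : W phi (P ++ Q) = W phi P + W phi Q.
Proof. induction P; simpl; [lra|]. rewrite IHP; lra. Qed.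
Lemma W_ext phi psi P : (forall a, phi a = psi a) -> W phi P = W psi P.
Proof. intros H; induction P; simpl; auto. rewrite IHP, H; auto. Qed.
Lemma W_plus phi psi P : W (fun a => phi a + psi a) P = W phi P + W psi P.
Proof. induction P; simpl; [lra|]. rewrite IHP; lra. Qed.
Lemma W_scal c phi P : W (fun a => c * phi a) P = c * W phi P.
Proof. induction P; simpl; [lra|]. rewrite IHP; lra. Qed.
Lemma W_pscale c phi P : W phi (pscale c P) = c * W phi P.
Proof. induction P; simpl; [lra|]. rewrite IHP; lra. Qed.
Lemma W_zero P : W (fun _ => 0) P = 0.
Proof. induction P; simpl; auto. rewrite IHP; lra. Qed.

Lemma coef_W P a : coef P a = W (fun b => if meq a b then 1 else 0) P.
Proof. induction P; simpl; auto. rewrite IHP. destruct (meq a (snd a0)); lra. Qed.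

Lemma coef_app P Q a : coef (P ++ Q) a = coef P a + coef Q a.
Proof. rewrite !coef_W, W_app; auto. Qed.
Lemma coef_padd P Q a : coef (padd P Q) a = coef P a + coef Q a.
Proof. apply coef_app. Qed.
Lemma coef_pscale c P a : coef (pscale c P) a = c * coef P a.
Proof. rewrite !coef_W, W_pscale; auto. Qed.
Lemma coef_psub P Q a : coef (psub P Q) a = coef P a - coef Q a.
Proof. unfold psub; rewrite coef_padd, coef_pscale; lra. Qed.

Lemma coef_inv P : minv (coef P).
Proof.
  intros a b H. rewrite !coef_W. apply W_ext. intros c.
  destruct (meq a c) eqn:E1; destruct (meq b c) eqn:E2; auto.
  - rewrite (meq_trans b a c) in E2; [discriminate| |auto]. rewrite meq_sym; auto.
  - rewrite (meq_trans a b c) in E1; auto; discriminate.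
Qed.

Lemma W_split phi a0 P :
  W phi P = W phi (filter (fun t => meq a0 (snd t)) P)
          + W phi (filter (fun t => negb (meq a0 (snd t))) P).
Proof. induction P; simpl; [lra|]. destruct (meq a0 (snd a)); simpl; rewrite IHP; lra. Qed.

Lemma W_class phi a0 P : minv phi ->
  W phi (filter (fun t => meq a0 (snd t)) P) = phi a0 * coef P a0.
Proof.
  intros Hi; induction P; simpl; [lra|].
  destruct (meq a0 (snd a)) eqn:E; simpl; rewrite IHP; [|lra].
  rewrite (Hi (snd a) a0); [lra|]. rewrite meq_sym; auto.
Qed.

Lemma coef_filter_not a0 P a :
  coef (filter (fun t => negb (meq a0 (snd t))) P) a =
  if meq a a0 then 0 else coef P a.
Proof.
  induction P; simpl; [destruct (meq a a0); auto|].
  destruct (meq a0 (snd a1)) eqn:E; simpl; rewrite IHP.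
  - destruct (meq a a0) eqn:E2; auto.
    destruct (meq a (snd a1)) eqn:E3; auto.
    rewrite (meq_trans a (snd a1) a0) in E2; [discriminate|auto|]. rewrite meq_sym; auto.
  - destruct (meq a a0) eqn:E2; auto.
    destruct (meq a (snd a1)) eqn:E3; auto.
    rewrite (meq_trans a0 a (snd a1)) in E; [discriminate| |auto]. rewrite meq_sym; auto.
Qed.

Lemma filter_len_lt {A} (f : A -> bool) (l : list A) x :
  f x = false -> (length (filter f (x :: l)) < length (x :: l))%nat.
Proof.
  intros H; simpl; rewrite H. pose proof (filter_length_le f l). simpl; lia.
Qed.

Lemma W_vanish phi P : minv phi -> (forall a, coef P a <> 0 -> phi a = 0) -> W phi P = 0.
Proof.
  intros Hi. remember (length P) as k eqn:Hk. revert P Hk.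
  induction k as [k IH] using lt_wf_ind. intros P Hk H.
  destruct P as [|t P']; [reflexivity|].
  rewrite (W_split phi (snd t)), W_class by auto.
  rewrite (IH (length (filter (fun t0 => negb (meq (snd t) (snd t0))) (t :: P')))).
  - destruct (Req_dec (coef (t :: P') (snd t)) 0) as [E|E].
    + rewrite E; lra.
    + rewrite (H _ E); lra.
  - subst k. apply filter_len_lt. rewrite meq_refl; auto.
  - auto.
  - intros a Ha. rewrite coef_filter_not in Ha. destruct (meq a (snd t)); [lra|]. auto.
Qed.

Lemma W_nonneg phi P : minv phi -> (forall a, 0 <= coef P a * phi a) -> 0 <= W phi P.
Proof.
  intros Hi. remember (length P) as k eqn:Hk. revert P Hk.
  induction k as [k IH] using lt_wf_ind. intros P Hk H.
  destruct P as [|t P']; [simpl; lra|].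
  rewrite (W_split phi (snd t)), W_class by auto.
  assert (0 <= W phi (filter (fun t0 => negb (meq (snd t) (snd t0))) (t :: P'))).
  { eapply IH; [|reflexivity|].
    - subst k. apply filter_len_lt. rewrite meq_refl; auto.
    - intros a. rewrite coef_filter_not. destruct (meq a (snd t)); [lra|]. auto. }
  specialize (H (snd t)). nra.
Qed.

Lemma W_coef_eq phi P Q : minv phi -> (forall a, coef P a = coef Q a) -> W phi P = W phi Q.
Proof.
  intros Hi H. assert (W phi (psub P Q) = 0).
  { apply W_vanish; auto. intros a Ha. rewrite coef_psub, H in Ha. lra. }
  unfold psub, padd in H0. rewrite W_app, W_pscale in H0. lra.
Qed.

Lemma W_supp phi psi P : minv phi -> minv psi ->
  (forall a, coef P a <> 0 -> phi a = psi a) -> W phi P = W psi P.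
Proof.
  intros H1 H2 H. assert (W (fun a => phi a - psi a) P = 0).
  { apply W_vanish. - intros a b E; rewrite (H1 a b E), (H2 a b E); auto.
    - intros a Ha; rewrite H; auto; lra. }
  assert (W (fun a => phi a + (-1) * psi a) P = W phi P - W psi P).
  { rewrite W_plus, W_scal; lra. }
  rewrite <- (W_ext (fun a => phi a - psi a)) in H3 by (intros; lra). lra.
Qed.

Definition Aabs (P : mpoly) : R := fold_right (fun t acc => Rabs (fst t) + acc) 0 P.

Lemma W_bound phi P B : (forall a, Rabs (phi a) <= B) -> Rabs (W phi P) <= B * Aabs P.
Proof.
  intros H; induction P; simpl. - rewrite Rabs_R0; lra.
  - eapply Rle_trans; [apply Rabs_triang|]. rewrite Rabs_mult.
    specialize (H (snd a)). pose proof (Rabs_pos (fst a)). nra.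
Qed.

Lemma Aabs_nonneg P : 0 <= Aabs P.
Proof. induction P; simpl; [lra|]. pose proof (Rabs_pos (fst a)); lra. Qed.

Definition prodR (l : list nat) (f : nat -> R) : R := fold_right (fun i acc => f i * acc) 1 l.
Definition sumN (l : list nat) (f : nat -> nat) : nat := fold_right (fun i acc => (f i + acc)%nat) 0%nat l.

Lemma prodR_app l1 l2 f : prodR (l1 ++ l2) f = prodR l1 f * prodR l2 f.
Proof. induction l1; simpl; [lra|]. rewrite IHl1; lra. Qed.
Lemma prodR_ext l f g : (forall i, In i l -> f i = g i) -> prodR l f = prodR l g.
Proof. induction l; simpl; intros; auto. f_equal; auto. Qed.
Lemma prodR_one l f : (forall i, In i l -> f i = 1) -> prodR l f = 1.
Proof. induction l; simpl; intros; auto. rewrite H, IHl; auto; lra. Qed.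
Lemma prodR_mult l f g : prodR l (fun i => f i * g i) = prodR l f * prodR l g.
Proof. induction l; simpl; [lra|]. rewrite IHl; lra. Qed.
Lemma sumR_app l1 l2 f : sumR (l1 ++ l2) f = sumR l1 f + sumR l2 f.
Proof. induction l1; simpl; [lra|]. rewrite IHl1; lra. Qed.
Lemma sumR_ext l f g : (forall i, In i l -> f i = g i) -> sumR l f = sumR l g.
Proof. unfold sumR; induction l; simpl; intros; auto. f_equal; auto. Qed.
Lemma sumN_app l1 l2 f : sumN (l1 ++ l2) f = (sumN l1 f + sumN l2 f)%nat.
Proof. induction l1; simpl; [lia|]. rewrite IHl1; lia. Qed.
Lemma sumN_ext l f g : (forall i, In i l -> f i = g i) -> sumN l f = sumN l g.
Proof. unfold sumN; induction l; simpl; intros; auto. Qed.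
Lemma sumN_zero l f : (forall i, In i l -> f i = 0%nat) -> sumN l f = 0%nat.
Proof. unfold sumN; induction l; simpl; intros; auto. rewrite H, IHl; auto. Qed.

Lemma seq_split L1 L2 : (L1 <= L2)%nat -> seq 0 L2 = seq 0 L1 ++ seq L1 (L2 - L1).
Proof. intros H. replace L2 with (L1 + (L2 - L1))%nat at 1 by lia. apply seq_app. Qed.

Lemma meval_L a x L : (length a <= L)%nat ->
  meval a x = prodR (seq 0 L) (fun i => x i ^ mexp a i).
Proof.
  intros H. unfold meval. rewrite (seq_split (length a) L) by auto.
  change (fold_right (fun i acc => x i ^ mexp a i * acc) 1 (seq 0 (length a)))
    with (prodR (seq 0 (length a)) (fun i => x i ^ mexp a i)).
  rewrite prodR_app. rewrite (prodR_one (seq (length a) _)); [lra|].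
  intros i Hi. apply in_seq in Hi. rewrite mexp_over by lia. auto.
Qed.

Lemma nth_nil0 i : nth i (@nil nat) 0%nat = 0%nat.
Proof. destruct i; auto. Qed.
Lemma mexp_madd a b i : mexp (madd a b) i = (mexp a i + mexp b i)%nat.
Proof.
  revert b i; induction a as [|x a IH]; intros b i; destruct b as [|y b]; unfold mexp in *;
  destruct i; simpl; rewrite ?nth_nil0; auto; try lia; apply IH.
Qed.
Lemma madd_len a b : length (madd a b) = Nat.max (length a) (length b).
Proof. revert b; induction a; destruct b; simpl; auto. Qed.

Lemma meval_madd a b x : meval (madd a b) x = meval a x * meval b x.
Proof.
  set (L := Nat.max (length a) (length b)).
  rewrite !(meval_L _ x L) by (unfold L; try rewrite madd_len; lia).
  rewrite <- prodR_mult. apply prodR_ext. intros; rewrite mexp_madd, pow_add; auto.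
Qed.

Lemma mdeg_madd a b : mdeg (madd a b) = (mdeg a + mdeg b)%nat.
Proof.
  unfold mdeg; revert b; induction a; destruct b; simpl; auto.
  rewrite IHa; lia.
Qed.

Lemma mexp_cons x a i : mexp (x :: a) (S i) = mexp a i.
Proof. reflexivity. Qed.

Lemma sumN_shift l f : sumN (map S l) f = sumN l (fun i => f (S i)).
Proof. induction l; simpl; auto. Qed.

Lemma mdeg_L a L : (length a <= L)%nat -> mdeg a = sumN (seq 0 L) (mexp a).
Proof.
  intros H. rewrite (seq_split (length a) L) by auto. rewrite sumN_app.
  rewrite (sumN_zero (seq (length a) _)).
  2:{ intros i Hi; apply in_seq in Hi; apply mexp_over; lia. }
  rewrite Nat.add_0_r. clear. unfold mdeg. induction a; simpl; auto.
  rewrite <- seq_shift, sumN_shift. rewrite IHa. auto.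
Qed.

Lemma mdeg_meq a b : meq a b = true -> mdeg a = mdeg b.
Proof.
  intros H; rewrite meq_spec in H.
  rewrite (mdeg_L a (Nat.max (length a) (length b))), (mdeg_L b (Nat.max (length a) (length b))) by lia.
  apply sumN_ext; auto.
Qed.

Lemma meval_meq a b x : meq a b = true -> meval a x = meval b x.
Proof.
  intros H; rewrite meq_spec in H.
  rewrite (meval_L a x (Nat.max (length a) (length b))), (meval_L b x (Nat.max (length a) (length b))) by lia.
  apply prodR_ext; intros; rewrite H; auto.
Qed.

Lemma meval_inv x : minv (fun a => meval a x).
Proof. intros a b H; apply meval_meq; auto. Qed.

Lemma madd_meq_l s s' t : meq s s' = true -> meq (madd s t) (madd s' t) = true.
Proof. rewrite !meq_spec; intros H i; rewrite !mexp_madd, H; auto. Qed.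
Lemma madd_meq_r s t t' : meq t t' = true -> meq (madd s t) (madd s t') = true.
Proof. rewrite !meq_spec; intros H i; rewrite !mexp_madd, H; auto. Qed.
Lemma madd_comm_meq s t : meq (madd s t) (madd t s) = true.
Proof. rewrite meq_spec; intros i; rewrite !mexp_madd; lia. Qed.
Lemma madd_assoc_meq s t u : meq (madd (madd s t) u) (madd s (madd t u)) = true.
Proof. rewrite meq_spec; intros i; rewrite !mexp_madd; lia. Qed.

Lemma mexp_munit i k j : mexp (munit i k) j = if Nat.eqb j i then k else 0%nat.
Proof.
  unfold mexp, munit. destruct (lt_eq_lt_dec j i) as [[H|H]|H].
  - rewrite app_nth1 by (rewrite repeat_length; auto). rewrite nth_repeat.
    destruct (Nat.eqb_spec j i); auto; lia.
  - subst. rewrite app_nth2 by (rewrite repeat_length; auto). rewrite repeat_length, Nat.sub_diag.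
    rewrite Nat.eqb_refl; auto.
  - rewrite app_nth2 by (rewrite repeat_length; lia). rewrite repeat_length.
    destruct (j - i)%nat eqn:E; [lia|]. simpl. destruct n; destruct (Nat.eqb_spec j i); auto; lia.
Qed.

Lemma meval_munit i k x : meval (munit i k) x = x i ^ k.
Proof.
  rewrite (meval_L _ x (S i)). 2:{ unfold munit; rewrite length_app, repeat_length; simpl; lia. }
  rewrite (seq_split i (S i)) by lia. rewrite prodR_app.
  rewrite prodR_one. 2:{ intros j Hj; apply in_seq in Hj. rewrite mexp_munit.
    destruct (Nat.eqb_spec j i); [lia|]; auto. }
  replace (S i - i)%nat with 1%nat by lia. simpl. rewrite mexp_munit, Nat.eqb_refl. lra.
Qed.

Lemma W_map_mul phi c s Q :
  W phi (map (fun t => (c * fst t, madd s (snd t))) Q) = c * W (fun t => phi (madd s t)) Q.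
Proof. induction Q; simpl; [lra|]. rewrite IHQ. lra. Qed.

Lemma W_pmul phi P Q : W phi (pmul P Q) = W (fun s => W (fun t => phi (madd s t)) Q) P.
Proof.
  induction P; simpl; auto. unfold pmul in *. simpl. rewrite W_app, IHP.
  rewrite W_map_mul. auto.
Qed.

Lemma W_inner_inv phi Q : minv phi -> minv (fun s => W (fun t => phi (madd s t)) Q).
Proof. intros H s s' E. apply W_ext. intros t. apply H, madd_meq_l; auto. Qed.

Lemma W_pmul_r phi P Q Q' : minv phi -> (forall a, coef Q a = coef Q' a) ->
  W phi (pmul P Q) = W phi (pmul P Q').
Proof.
  intros Hi H. rewrite !W_pmul. apply W_ext. intros s. apply W_coef_eq; auto.
  intros t t' E. apply Hi, madd_meq_r; auto.
Qed.

Lemma W_pmul_l phi P P' Q : minv phi -> (forall a, coef P a = coef P' a) ->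
  W phi (pmul P Q) = W phi (pmul P' Q).
Proof. intros Hi H. rewrite !W_pmul. apply W_coef_eq; auto. apply W_inner_inv; auto. Qed.

Lemma W_swap (F : monom -> monom -> R) P Q :
  W (fun s => W (fun t => F s t) Q) P = W (fun t => W (fun s => F s t) P) Q.
Proof.
  induction P; simpl. - rewrite W_zero; auto.
  - rewrite IHP. rewrite <- W_scal, <- W_plus. apply W_ext; intros; simpl; lra.
Qed.

Lemma W_pmul_comm phi P Q : minv phi -> W phi (pmul P Q) = W phi (pmul Q P).
Proof.
  intros Hi. rewrite !W_pmul, W_swap. apply W_ext; intros t; apply W_ext; intros s.
  apply Hi, madd_comm_meq.
Qed.

Lemma W_pmul_assoc phi P Q S : minv phi ->
  W phi (pmul (pmul P Q) S) = W phi (pmul P (pmul Q S)).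
Proof.
  intros Hi. rewrite W_pmul, W_pmul. rewrite W_pmul. apply W_ext; intros p.
  rewrite W_pmul. apply W_ext; intros q. apply W_ext; intros u. apply Hi, madd_assoc_meq.
Qed.

Definition coef_inv_W a : minv (fun b => if meq a b then 1 else 0).
Proof. intros b c E. destruct (meq a b) eqn:E1, (meq a c) eqn:E2; auto.
  - rewrite (meq_trans a b c) in E2; auto; discriminate.
  - rewrite (meq_trans a c b) in E1; auto; [discriminate|]. rewrite meq_sym; auto.
Qed.

Lemma coef_pmul_r P Q Q' a : (forall a, coef Q a = coef Q' a) -> coef (pmul P Q) a = coef (pmul P Q') a.
Proof. intros; rewrite !coef_W; apply W_pmul_r; auto; apply coef_inv_W. Qed.
Lemma coef_pmul_l P P' Q a : (forall a, coef P a = coef P' a) -> coef (pmul P Q) a = coef (pmul P' Q) a.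
Proof. intros; rewrite !coef_W; apply W_pmul_l; auto; apply coef_inv_W. Qed.
Lemma coef_pmul_comm P Q a : coef (pmul P Q) a = coef (pmul Q P) a.
Proof. rewrite !coef_W; apply W_pmul_comm; apply coef_inv_W. Qed.
Lemma coef_pmul_assoc P Q S a : coef (pmul (pmul P Q) S) a = coef (pmul P (pmul Q S)) a.
Proof. rewrite !coef_W; apply W_pmul_assoc; apply coef_inv_W. Qed.

Lemma peval_W P x : peval P x = W (fun a => meval a x) P.
Proof. reflexivity. Qed.
Lemma peval_app P Q x : peval (P ++ Q) x = peval P x + peval Q x.
Proof. rewrite !peval_W; apply W_app. Qed.
Lemma peval_pscale c P x : peval (pscale c P) x = c * peval P x.
Proof. rewrite !peval_W; apply W_pscale. Qed.
Lemma peval_psub P Q x : peval (psub P Q) x = peval P x - peval Q x.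
Proof. unfold psub, padd; rewrite peval_app, peval_pscale; lra. Qed.
Lemma peval_pconst c x : peval (pconst c) x = c.
Proof. unfold pconst, peval, meval; simpl; lra. Qed.
Lemma peval_pvar i x : peval (pvar i) x = x i.
Proof. unfold pvar. unfold peval; simpl. change (meval (munit i 1) x) with (meval (munit i 1) x).
  rewrite meval_munit; simpl; lra. Qed.
Lemma peval_pmul P Q x : peval (pmul P Q) x = peval P x * peval Q x.
Proof.
  rewrite !peval_W, W_pmul. rewrite (W_ext _ (fun s => meval s x * W (fun a => meval a x) Q)).
  - rewrite (W_ext _ (fun s => W (fun a => meval a x) Q * meval s x)) by (intros; lra).
    rewrite W_scal; lra.
  - intros s. rewrite <- W_scal. apply W_ext. intros; apply meval_madd.
Qed.
Lemma peval_ppow P k x : peval (ppow P k) x = peval P x ^ k.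
Proof. induction k; simpl. - apply peval_pconst. - rewrite peval_pmul, IHk; auto. Qed.
Lemma peval_psum l F x : peval (psum l F) x = sumR l (fun i => peval (F i) x).
Proof. induction l; simpl; auto. unfold padd; rewrite peval_app, IHl; auto. Qed.

Definition Sub (sigma : nat -> mpoly) (a : monom) : mpoly :=
  fold_right (fun i acc => pmul (ppow (sigma i) (mexp a i)) acc) (pconst 1) (seq 0 (length a)).

Lemma psubst_eq P sigma : psubst P sigma = flat_map (fun t => pmul (pconst (fst t)) (Sub sigma (snd t))) P.
Proof. reflexivity. Qed.

Lemma W_flat_map phi (F : R * monom -> mpoly) P :
  W phi (flat_map F P) = fold_right (fun t acc => W phi (F t) + acc) 0 P.
Proof. induction P; simpl; auto. rewrite W_app, IHP; auto. Qed.

Lemma peval_Sub sigma a x : peval (Sub sigma a) x = meval a (fun i => peval (sigma i) x).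
Proof.
  unfold Sub, meval. induction (seq 0 (length a)); simpl. - apply peval_pconst.
  - rewrite peval_pmul, peval_ppow, IHl; auto.
Qed.

Lemma peval_psubst P sigma x : peval (psubst P sigma) x = peval P (fun i => peval (sigma i) x).
Proof.
  rewrite psubst_eq. rewrite peval_W, W_flat_map. induction P as [|t P IH]; [reflexivity|].
  change (peval (t :: P) ?z) with (fst t * meval (snd t) z + peval P z).
  rewrite <- IH. cbn [fold_right]. f_equal.
  rewrite <- peval_W, peval_pmul, peval_pconst, peval_Sub; auto.
Qed.

Definition supp (Q : monom -> Prop) (P : mpoly) : Prop := forall a, coef P a <> 0 -> Q a.

Lemma supp_mono (Q Q' : monom -> Prop) P : (forall a, Q a -> Q' a) -> supp Q P -> supp Q' P.
Proof. unfold supp; auto. Qed.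
Lemma supp_padd Q P P' : supp Q P -> supp Q P' -> supp Q (padd P P').
Proof. unfold supp; intros H1 H2 a Ha. rewrite coef_padd in Ha.
  destruct (Req_dec (coef P a) 0); [apply H2|apply H1]; auto; lra. Qed.
Lemma supp_pscale Q c P : supp Q P -> supp Q (pscale c P).
Proof. unfold supp; intros H a Ha. rewrite coef_pscale in Ha. apply H. intro E; apply Ha; rewrite E; lra. Qed.
Lemma supp_psub Q P P' : supp Q P -> supp Q P' -> supp Q (psub P P').
Proof. intros; apply supp_padd; auto; apply supp_pscale; auto. Qed.
Lemma supp_psum Q l F : (forall i, In i l -> supp Q (F i)) -> supp Q (psum l F).
Proof. induction l; simpl; intros H. - intros a Ha; unfold coef in Ha; simpl in Ha; lra.
  - apply supp_padd; auto. Qed.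

Lemma coef_pconst c a : coef (pconst c) a = if meq a [] then c else 0.
Proof. unfold coef, pconst; simpl. destruct (meq a []); lra. Qed.

Lemma supp_pconst c : supp (fun a => forall i, mexp a i = 0%nat) (pconst c).
Proof. intros a Ha. rewrite coef_pconst in Ha. destruct (meq a []) eqn:E; [|lra].
  rewrite meq_spec in E. intros i; rewrite E. destruct i; auto. Qed.

Lemma minv_comp phi (h : monom -> monom) : minv phi ->
  (forall a b, meq a b = true -> meq (h a) (h b) = true) -> minv (fun a => phi (h a)).
Proof. intros H1 H2 a b E; apply H1, H2; auto. Qed.

Lemma supp_pmul Q1 Q2 P P' : supp Q1 P -> supp Q2 P' ->
  supp (fun a => exists s t, Q1 s /\ Q2 t /\ forall i, mexp a i = (mexp s i + mexp t i)%nat) (pmul P P').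
Proof.
  intros H1 H2 a Ha. match goal with |- ?G => destruct (classic G) as [|Hn]; auto end.
  exfalso. apply Ha. clear Ha.
  rewrite coef_W, W_pmul. apply W_vanish.
  - apply (W_inner_inv (fun b => if meq a b then 1 else 0)), coef_inv_W.
  - intros s Hs. apply W_vanish.
    + apply (minv_comp (fun b => if meq a b then 1 else 0) (madd s)); [apply coef_inv_W|]. intros; apply madd_meq_r; auto.
    + intros t Ht. destruct (meq a (madd s t)) eqn:E; auto.
      exfalso; apply Hn. exists s, t. split; [apply H1; auto|]. split; [apply H2; auto|].
      rewrite meq_spec in E. intros i; rewrite E, mexp_madd; auto.
Qed.

Definition Fm (ev : bool) (n k : nat) (a : monom) : Prop :=
  (forall i, (n <= i)%nat -> mexp a i = 0%nat) /\ mdeg a = k /\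
  (ev = true -> forall i, Nat.Even (mexp a i)).

Lemma sumN_plus l f g : sumN l (fun i => (f i + g i)%nat) = (sumN l f + sumN l g)%nat.
Proof. unfold sumN; induction l; simpl; auto. rewrite IHl; lia. Qed.

Lemma mdeg_sum a s t : (forall i, mexp a i = (mexp s i + mexp t i)%nat) -> mdeg a = (mdeg s + mdeg t)%nat.
Proof.
  intros H. set (L := Nat.max (length a) (Nat.max (length s) (length t))).
  rewrite (mdeg_L a L), (mdeg_L s L), (mdeg_L t L) by (unfold L; lia).
  rewrite <- sumN_plus. apply sumN_ext; auto.
Qed.

Lemma supp_pmul_Fm ev n k1 k2 P Q : supp (Fm ev n k1) P -> supp (Fm ev n k2) Q ->
  supp (Fm ev n (k1 + k2)) (pmul P Q).
Proof.
  intros H1 H2. eapply supp_mono; [|apply supp_pmul; eauto].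
  intros a (s & t & (Hs1 & Hs2 & Hs3) & (Ht1 & Ht2 & Ht3) & H). split; [|split].
  - intros i Hi; rewrite H, Hs1, Ht1; auto.
  - rewrite (mdeg_sum a s t H); lia.
  - intros E i. rewrite H. destruct (Hs3 E i) as [u Hu], (Ht3 E i) as [v Hv]. exists (u+v)%nat; lia.
Qed.

Lemma mdeg_zero a : (forall i, mexp a i = 0%nat) -> mdeg a = 0%nat.
Proof. intros H. rewrite (mdeg_L a (length a)) by lia. apply sumN_zero; auto. Qed.

Lemma supp_pconst_Fm ev n c : supp (Fm ev n 0) (pconst c).
Proof.
  eapply supp_mono; [|apply supp_pconst]. intros a H. split; [|split]; auto.
  - apply mdeg_zero; auto.
  - intros _ i; rewrite H; exists 0%nat; lia.
Qed.

Lemma supp_ppow_Fm ev n k P j : supp (Fm ev n k) P -> supp (Fm ev n (j * k)) (ppow P j).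
Proof.
  intros H; induction j; cbn [ppow]. - apply supp_pconst_Fm.
  - apply supp_pmul_Fm; auto.
Qed.

Lemma coef_pvar i a : coef (pvar i) a = if meq a (munit i 1) then 1 else 0.
Proof. unfold coef, pvar; simpl. destruct (meq a (munit i 1)); lra. Qed.

Lemma supp_pvarpow i k : supp (fun a => forall l, mexp a l = if Nat.eqb l i then k else 0%nat) (ppow (pvar i) k).
Proof.
  induction k; cbn [ppow].
  - eapply supp_mono; [|apply supp_pconst]. intros a H l; rewrite H; destruct (l =? i); auto.
  - assert (Hv : supp (fun a => forall l, mexp a l = if Nat.eqb l i then 1%nat else 0%nat) (pvar i)).
    { intros a Ha. rewrite coef_pvar in Ha. destruct (meq a (munit i 1)) eqn:E; [|lra].
      rewrite meq_spec in E. intros l; rewrite E, mexp_munit; auto. }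
    eapply supp_mono; [|apply (supp_pmul _ _ _ _ Hv IHk)].
    intros a (s & t & Hs & Ht & H) l. rewrite H, Hs, Ht. destruct (l =? i); lia.
Qed.

Lemma list_sum_repeat0 i : list_sum (repeat 0%nat i) = 0%nat.
Proof. induction i; simpl; auto. Qed.

Lemma mdeg_munit i k : mdeg (munit i k) = k.
Proof. unfold mdeg, munit. rewrite list_sum_app, list_sum_repeat0. simpl; lia. Qed.

Lemma supp_pvarpow_Fm ev n i k : (i < n)%nat -> (ev = true -> Nat.Even k) ->
  supp (Fm ev n k) (ppow (pvar i) k).
Proof.
  intros Hi He. eapply supp_mono; [|apply supp_pvarpow]. intros a H. split; [|split].
  - intros l Hl; rewrite H. destruct (Nat.eqb_spec l i); auto; lia.
  - rewrite <- (mdeg_munit i k). apply mdeg_meq. apply meq_spec. intros l; rewrite H, mexp_munit; auto.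
  - intros E l. rewrite H. destruct (l =? i); auto. exists 0%nat; auto.
Qed.

Lemma W_map_mon phi (h : monom -> monom) q :
  W phi (map (fun t => (fst t, h (snd t))) q) = W (fun a => phi (h a)) q.
Proof. induction q; simpl; auto. rewrite IHq; auto. Qed.

Lemma supp_homog n k yi q : in_vars n q -> (n <= yi)%nat ->
  (forall a, coef q a <> 0 -> (mdeg a <= k)%nat) -> supp (Fm false (S yi) k) (homog k yi q).
Proof.
  intros Hv Hn Hd a Ha. match goal with |- ?G => destruct (classic G) as [|Hn']; auto end.
  exfalso. apply Ha. unfold homog. rewrite coef_W, (W_map_mon _ (fun b => madd b (munit yi (k - mdeg b)))). apply W_vanish.
  - apply (minv_comp (fun b => if meq a b then 1 else 0)); [apply coef_inv_W|].
    intros b b' E. rewrite (mdeg_meq _ _ E). apply madd_meq_l; auto.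
  - intros b Hb. destruct (meq a (madd b (munit yi (k - mdeg b)))) eqn:E; auto.
    exfalso; apply Hn'. rewrite meq_spec in E. split; [|split].
    + intros i Hi. rewrite E, mexp_madd, mexp_munit, (Hv b Hb i) by lia.
      destruct (Nat.eqb_spec i yi); lia.
    + rewrite (mdeg_meq _ _ (proj2 (meq_spec _ _) E)). rewrite mdeg_madd, mdeg_munit.
      specialize (Hd b Hb); lia.
    + discriminate.
Qed.

Lemma deg_fold_ge P (l : mpoly) (t : R * monom) : In t l -> coef P (snd t) <> 0 ->
  (mdeg (snd t) <= fold_right (fun (t : R * monom) acc =>
     if Req_EM_T (coef P (snd t)) 0 then acc else Nat.max (mdeg (snd t)) acc) 0%nat l)%nat.
Proof.
  induction l; simpl; [tauto|]. intros [->|H] Hc.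
  - destruct (Req_EM_T (coef P (snd t)) 0); [contradiction|lia].
  - specialize (IHl H Hc). destruct (Req_EM_T (coef P (snd a)) 0); lia.
Qed.

Lemma coef_nonzero_in P a : coef P a <> 0 -> exists t, In t P /\ meq a (snd t) = true.
Proof.
  induction P; simpl. - unfold coef; simpl; lra.
  - unfold coef; simpl. destruct (meq a (snd a0)) eqn:E.
    + intros _; exists a0; auto.
    + intros H. destruct IHP as (t & H1 & H2); auto. exists t; auto.
Qed.

Lemma deg_ge P a : coef P a <> 0 -> (mdeg a <= deg P)%nat.
Proof.
  intros H. destruct (coef_nonzero_in P a H) as (t & Ht & E).
  rewrite (mdeg_meq _ _ E). apply deg_fold_ge; auto.
  rewrite <- (coef_inv P a (snd t) E); auto.
Qed.

Lemma peval_homog_1 k yi q x : x yi = 1 -> peval (homog k yi q) x = peval q x.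
Proof.
  intros H. unfold homog. rewrite !peval_W, (W_map_mon _ (fun b => madd b (munit yi (k - mdeg b)))). apply W_ext; intros a.
  rewrite meval_madd, meval_munit, H, pow1; lra.
Qed.

Lemma peval_vars n P x x' : in_vars n P -> (forall i, (i < n)%nat -> x i = x' i) ->
  peval P x = peval P x'.
Proof.
  intros Hv Hx. rewrite !peval_W. apply W_supp; try apply meval_inv.
  intros a Ha. rewrite !(meval_L a _ (length a)) by lia. apply prodR_ext.
  intros i _. destruct (lt_dec i n). - rewrite Hx; auto.
  - rewrite (Hv a Ha i) by lia. auto.
Qed.

Lemma prodR_scal_pow l t e : prodR l (fun i => t ^ e i) = t ^ (sumN l e).
Proof. unfold prodR, sumN; induction l; simpl; auto. rewrite IHl, pow_add; auto. Qed.

Lemma meval_scale a t x : meval a (fun i => t * x i) = t ^ mdeg a * meval a x.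
Proof.
  rewrite !(meval_L a _ (length a)), (mdeg_L a (length a)) by lia.
  rewrite <- prodR_scal_pow, <- prodR_mult. apply prodR_ext; intros; apply Rpow_mult_distr.
Qed.

Lemma peval_scale ev n k P t x : supp (Fm ev n k) P ->
  peval P (fun i => t * x i) = t ^ k * peval P x.
Proof.
  intros H. rewrite !peval_W. rewrite <- W_scal. apply W_supp.
  - apply meval_inv.
  - intros a b E. rewrite (meval_meq a b x E); auto.
  - intros a Ha. rewrite meval_scale. destruct (H a Ha) as (_ & -> & _); auto.
Qed.

Lemma prodR_nonneg l f : (forall i, In i l -> 0 <= f i) -> 0 <= prodR l f.
Proof. unfold prodR; induction l; simpl; intros; [lra|]. apply Rmult_le_pos; auto. Qed.

Lemma peval_nonneg P x : nonneg_coefs P -> (forall i, 0 <= x i) -> 0 <= peval P x.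
Proof.
  intros H Hx. rewrite peval_W. apply W_nonneg; [apply meval_inv|].
  intros a. apply Rmult_le_pos; [apply H|]. unfold meval.
  apply prodR_nonneg. intros; apply pow_le; auto.
Qed.

Definition ff (n k : nat) : R := prodR (seq 0 k) (fun l => INR n - INR l).

Lemma ff_S n k : ff n (S k) = ff n k * (INR n - INR k).
Proof. unfold ff. rewrite seq_S, prodR_app. simpl. lra. Qed.

Lemma ff_id n k : (1 <= n)%nat -> ff n k * (INR n - INR k) = INR n * ff (n - 1) k.
Proof.
  intros Hn. induction k.
  - unfold ff; simpl; lra.
  - rewrite ff_S, ff_S. rewrite <- Rmult_assoc, <- IHk. rewrite minus_INR by lia.
    rewrite S_INR. simpl. lra.
Qed.

Lemma prodR_zero l f j : In j l -> f j = 0 -> prodR l f = 0.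
Proof. unfold prodR; induction l; simpl; [tauto|]. intros [->|H] E. - rewrite E; lra.
  - rewrite IHl; auto; lra. Qed.

Lemma ff_big n k : (n < k)%nat -> ff n k = 0.
Proof. intros H. unfold ff. apply (prodR_zero _ _ n). - apply in_seq; lia. - lra. Qed.

Lemma ff_fact n : ff n n = INR (fact n).
Proof.
  induction n. - unfold ff; simpl; auto.
  - rewrite ff_S. assert (H := ff_id (S n) n). replace (S n - 1)%nat with n in H by lia.
    rewrite H by lia. rewrite IHn. rewrite fact_simpl, mult_INR. rewrite S_INR. lra.
Qed.

Lemma prodR_split L j f : (j < L)%nat ->
  prodR (seq 0 L) f = prodR (seq 0 j) f * f j * prodR (seq (S j) (L - S j)) f.
Proof.
  intros H. replace L with (j + (1 + (L - S j)))%nat at 1 by lia.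
  rewrite seq_app, prodR_app. rewrite seq_app, prodR_app. simpl. rewrite Nat.add_1_r. lra.
Qed.

Lemma prodR_replace L j f f' : (j < L)%nat -> (forall i, i <> j -> f i = f' i) ->
  f' j * prodR (seq 0 L) f = f j * prodR (seq 0 L) f'.
Proof.
  intros Hj H. rewrite !(prodR_split L j) by auto.
  rewrite (prodR_ext (seq 0 j) f f'), (prodR_ext (seq (S j) _) f f').
  - lra.
  - intros i Hi; apply in_seq in Hi; apply H; lia.
  - intros i Hi; apply in_seq in Hi; apply H; lia.
Qed.

Lemma W_sumR (F : nat -> monom -> R) l P :
  W (fun c => sumR l (fun j => F j c)) P = sumR l (fun j => W (F j) P).
Proof.
  induction l; simpl. - apply W_zero.
  - rewrite W_plus, IHl. auto.
Qed.

Lemma sumR_plus l f g : sumR l (fun i => f i + g i) = sumR l f + sumR l g.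
Proof. unfold sumR; induction l; simpl; [lra|]. rewrite IHl; lra. Qed.
Lemma sumR_scal l c f : sumR l (fun i => c * f i) = c * sumR l f.
Proof. unfold sumR; induction l; simpl; [lra|]. rewrite IHl; lra. Qed.
Lemma sumR_INR l f : sumR l (fun i => INR (f i)) = INR (sumN l f).
Proof. unfold sumR, sumN; induction l; simpl; auto. rewrite IHl, plus_INR; auto. Qed.
Lemma sumR_zero l f : (forall i, In i l -> f i = 0) -> sumR l f = 0.
Proof. unfold sumR; induction l; simpl; intros; auto. rewrite H, IHl; auto; lra. Qed.

Definition msub2 (b : monom) (j : nat) : monom :=
  map (fun i => (mexp b i - if Nat.eqb i j then 2 else 0)%nat) (seq 0 (length b)).

Lemma nth_map_seq (f : nat -> nat) L i : (i < L)%nat -> nth i (map f (seq 0 L)) 0%nat = f i.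
Proof. intros H. rewrite (nth_indep _ 0%nat (f 0%nat)) by (rewrite length_map, length_seq; auto).
  rewrite map_nth, seq_nth; auto. Qed.

Lemma mexp_msub2 b j i : mexp (msub2 b j) i = (mexp b i - if Nat.eqb i j then 2 else 0)%nat.
Proof.
  unfold msub2. unfold mexp at 1. destruct (lt_dec i (length b)).
  - rewrite nth_map_seq; auto.
  - rewrite nth_overflow by (rewrite length_map, length_seq; lia). rewrite mexp_over by lia. lia.
Qed.

Definition half (b : monom) (j : nat) : nat := Nat.div2 (mexp b j).

Definition Good (L k : nat) (b : monom) : Prop := Fm true L k b.

Definition phiW (L : nat) (b c : monom) : R := prodR (seq 0 L) (fun j => ff (half b j) (half c j)).

Definition kap (L K : nat) (b : monom) : R :=
  INR (fact K) / prodR (seq 0 L) (fun j => INR (fact (half b j))).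

Lemma phiW_inv L b : minv (phiW L b).
Proof. intros c c' E. rewrite meq_spec in E. unfold phiW, half. apply prodR_ext. intros; rewrite E; auto. Qed.

Lemma even_div2 k : Nat.Even k -> k = (2 * Nat.div2 k)%nat.
Proof. intros [u ->]. rewrite Nat.div2_double. auto. Qed.

Lemma sum_half L k c : Good L (2 * k) c -> sumN (seq 0 L) (half c) = k.
Proof.
  intros (H1 & H2 & H3). rewrite (mdeg_L c (Nat.max L (length c))) in H2 by lia.
  rewrite (seq_split L (Nat.max L (length c))) in H2 by lia. rewrite sumN_app in H2.
  rewrite (sumN_zero (seq L _)) in H2.
  2:{ intros i Hi; apply in_seq in Hi; apply H1; lia. }
  assert (E : sumN (seq 0 L) (mexp c) = (2 * sumN (seq 0 L) (half c))%nat).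
  { clear H2. unfold sumN, half. induction (seq 0 L); simpl; auto. rewrite IHl.
    rewrite (even_div2 (mexp c a)) at 1 by (apply H3; auto). lia. }
  lia.
Qed.

Lemma prodR_pos l f : (forall i, In i l -> 0 < f i) -> 0 < prodR l f.
Proof. unfold prodR; induction l; simpl; intros; [lra|]. apply Rmult_lt_0_compat; auto. Qed.

Lemma fact_pos_R n : 0 < INR (fact n).
Proof. apply lt_0_INR, lt_O_fact. Qed.

Lemma kap_pos L K b : 0 < kap L K b.
Proof. unfold kap. apply Rdiv_lt_0_compat; [apply fact_pos_R|]. apply prodR_pos; intros; apply fact_pos_R. Qed.

Definition Tprop (L : nat) (T : mpoly) : Prop := forall X b,
  coef (pmul T X) b = sumR (seq 0 L) (fun j => if Nat.leb 2 (mexp b j) then coef X (msub2 b j) else 0).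

Lemma madd_nil_r s : madd s [] = s.
Proof. destruct s; auto. Qed.

Lemma coef_pmul_one P a : coef (pmul P (pconst 1)) a = coef P a.
Proof.
  rewrite !coef_W, W_pmul. apply W_ext. intros s. unfold pconst; simpl. rewrite madd_nil_r. lra.
Qed.

Lemma sumN_mono l f g : (forall j, In j l -> (f j <= g j)%nat) -> (sumN l f <= sumN l g)%nat.
Proof. unfold sumN; induction l; simpl; intros H; auto.
  assert (f a <= g a)%nat by auto. assert (forall j, In j l -> (f j <= g j)%nat) by auto.
  specialize (IHl H1). lia. Qed.

Lemma sumN_le_eq l f g : (forall j, In j l -> (f j <= g j)%nat) -> sumN l f = sumN l g ->
  forall j, In j l -> f j = g j.
Proof.
  induction l; simpl; [tauto|]. intros H E.
  assert (Ha : (f a <= g a)%nat) by auto.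
  assert (Hl : forall j, In j l -> (f j <= g j)%nat) by auto.
  pose proof (sumN_mono l f g Hl). unfold sumN in E, H0; simpl in E.
  intros j [<-|Hj]. - lia.
  - apply IHl; auto. unfold sumN. lia.
Qed.

Lemma ff_pos n k : (k <= n)%nat -> 0 < ff n k.
Proof. intros H. unfold ff. apply prodR_pos. intros l Hl; apply in_seq in Hl.
  assert (INR l < INR n) by (apply lt_INR; lia). lra. Qed.

Lemma div2_sub2 x : Nat.div2 (x - 2) = (Nat.div2 x - 1)%nat.
Proof. destruct x as [|[|x]]; simpl; auto. rewrite !Nat.sub_0_r; auto. Qed.

Lemma half_msub2 b j i : half (msub2 b j) i = (half b i - if Nat.eqb i j then 1 else 0)%nat.
Proof. unfold half; rewrite mexp_msub2. destruct (i =? j). - apply div2_sub2. - rewrite !Nat.sub_0_r; auto. Qed.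

Lemma base_fact L Dh G b : supp (Fm true L (2*Dh)) G -> Good L (2*(0+Dh)) b ->
  W (phiW L b) G = prodR (seq 0 L) (fun j => INR (fact (half b j))) * coef G b.
Proof.
  intros HG Hb. rewrite coef_W, <- W_scal. apply W_supp; [apply phiW_inv| |].
  - intros c c' E. rewrite (coef_inv_W b c c' E); auto.
  - intros c Hc. specialize (HG c Hc). replace (0 + Dh)%nat with Dh in Hb by lia.
    destruct (meq b c) eqn:E.
    + rewrite Rmult_1_r. unfold phiW. apply prodR_ext. intros j _. rewrite meq_spec in E.
      unfold half; rewrite E. apply ff_fact.
    + rewrite Rmult_0_r. destruct (classic (exists j, (j < L)%nat /\ (half b j < half c j)%nat)) as [(j & Hj & Hl)|Hn].
      * unfold phiW. apply (prodR_zero _ _ j). apply in_seq; lia. apply ff_big; auto.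
      * exfalso. assert (Heq : forall j, In j (seq 0 L) -> half c j = half b j).
        { apply sumN_le_eq. - intros j Hj; apply in_seq in Hj.
            destruct (le_lt_dec (half c j) (half b j)); auto. exfalso; apply Hn; exists j; split; auto; lia.
          - rewrite (sum_half L Dh c HG), (sum_half L Dh b Hb); auto. }
        assert (meq b c = true); [|congruence]. apply meq_spec. intros i.
        destruct (lt_dec i L).
        -- destruct Hb as (_ & _ & Eb), HG as (_ & _ & Ec).
           rewrite (even_div2 (mexp b i)), (even_div2 (mexp c i)) by auto.
           fold (half b i) (half c i). rewrite Heq; auto. apply in_seq; lia.
        -- destruct Hb as (Eb & _), HG as (Ec & _). rewrite Eb, Ec; auto; lia.
Qed.

Lemma step_point L b c j : (j < L)%nat ->
  INR (half b j) * phiW L (msub2 b j) c = (INR (half b j) - INR (half c j)) * phiW L b c.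
Proof.
  intros Hj. unfold phiW.
  set (f := fun i => ff (half b i) (half c i)).
  set (f' := fun i => ff (half (msub2 b j) i) (half c i)).
  assert (Hr : f' j * prodR (seq 0 L) f = f j * prodR (seq 0 L) f').
  { apply prodR_replace; auto. intros i Hi. unfold f, f'. rewrite half_msub2.
    destruct (Nat.eqb_spec i j); [lia|]. rewrite Nat.sub_0_r; auto. }
  change (INR (half b j) * prodR (seq 0 L) f' = (INR (half b j) - INR (half c j)) * prodR (seq 0 L) f).
  assert (Hf'j : f' j = ff (half b j - 1) (half c j)).
  { unfold f'. rewrite half_msub2, Nat.eqb_refl; auto. }
  destruct (Nat.eq_dec (half b j) 0) as [E0|E0].
  - rewrite E0. simpl INR. destruct (Nat.eq_dec (half c j) 0) as [F0|F0].
    + rewrite F0; simpl; lra.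
    + rewrite (prodR_zero _ f j); [lra|apply in_seq; lia|]. unfold f; rewrite E0; apply ff_big; lia.
  - destruct (le_lt_dec (half c j) (half b j)) as [Hle|Hlt].
    + assert (Hpos : 0 < f j) by (unfold f; apply ff_pos; auto).
      assert (Hid := ff_id (half b j) (half c j) ltac:(lia)).
      apply (Rmult_eq_reg_l (f j)); [|lra].
      change (ff (half b j) (half c j)) with (f j) in Hid. rewrite <- Hf'j in Hid.
      transitivity (INR (half b j) * (f j * prodR (seq 0 L) f')); [ring|].
      rewrite <- Hr. transitivity ((f j * (INR (half b j) - INR (half c j))) * prodR (seq 0 L) f);
      [rewrite Hid; ring|ring].
    + rewrite (prodR_zero _ f j); [|apply in_seq; lia|unfold f; apply ff_big; lia].
      rewrite (prodR_zero _ f' j); [lra|apply in_seq; lia|]. rewrite Hf'j; apply ff_big; lia.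
Qed.

Lemma sum_point L K Dh b c : Good L (2*(S K + Dh)) b -> Fm true L (2*Dh) c ->
  sumR (seq 0 L) (fun j => INR (half b j) * phiW L (msub2 b j) c) = INR (S K) * phiW L b c.
Proof.
  intros Hb Hc. rewrite (sumR_ext _ _ (fun j => INR (half b j) * phiW L b c + (-1) * (INR (half c j) * phiW L b c))).
  2:{ intros j Hj; apply in_seq in Hj. rewrite step_point by lia. lra. }
  rewrite sumR_plus, sumR_scal. rewrite (sumR_ext _ _ (fun j => phiW L b c * INR (half b j))) by (intros; lra).
  rewrite (sumR_ext _ (fun j => INR (half c j) * phiW L b c) (fun j => phiW L b c * INR (half c j))) by (intros; lra).
  rewrite !sumR_scal, !sumR_INR. rewrite (sum_half L _ b Hb), (sum_half L _ c Hc).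
  rewrite plus_INR, S_INR. lra.
Qed.

Lemma kap_step L K b j : (j < L)%nat -> (1 <= half b j)%nat ->
  kap L K (msub2 b j) * INR (S K) = kap L (S K) b * INR (half b j).
Proof.
  intros Hj Hb. unfold kap.
  set (P' := prodR (seq 0 L) (fun i => INR (fact (half (msub2 b j) i)))).
  set (P := prodR (seq 0 L) (fun i => INR (fact (half b i)))).
  assert (HP' : 0 < P') by (apply prodR_pos; intros; apply fact_pos_R).
  assert (HP : 0 < P) by (apply prodR_pos; intros; apply fact_pos_R).
  assert (Hr : INR (fact (half b j)) * P' = INR (fact (half (msub2 b j) j)) * P).
  { unfold P, P'. apply (prodR_replace L j (fun i => INR (fact (half (msub2 b j) i))) (fun i => INR (fact (half b i)))); auto.
    intros i Hi. rewrite half_msub2. destruct (Nat.eqb_spec i j); [lia|].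
    rewrite Nat.sub_0_r; auto. }
  rewrite half_msub2, Nat.eqb_refl in Hr.
  replace (half b j) with (S (half b j - 1)) in Hr at 1 by lia.
  rewrite fact_simpl, mult_INR in Hr.
  assert (Hf := fact_pos_R (half b j - 1)).
  assert (E : INR (S (half b j - 1)) * P' = P).
  { apply (Rmult_eq_reg_l (INR (fact (half b j - 1)))); [|lra]. rewrite <- Hr. ring. }
  replace (S (half b j - 1)) with (half b j) in E by lia.
  rewrite fact_simpl, mult_INR. rewrite <- E. field. split; [lra|].
  assert (0 < INR (half b j)) by (apply lt_0_INR; lia). lra.
Qed.

Lemma mexp_decomp b j i : (2 <= mexp b j)%nat ->
  mexp b i = (mexp (msub2 b j) i + mexp (munit j 2) i)%nat.
Proof. intros H. rewrite mexp_msub2, mexp_munit. destruct (Nat.eqb_spec i j); subst; lia. Qed.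

Lemma good_down L K Dh b j : (j < L)%nat -> (2 <= mexp b j)%nat ->
  Good L (2*(S K + Dh)) b -> Good L (2*(K + Dh)) (msub2 b j).
Proof.
  intros Hj H2 (H1 & Hd & He). split; [|split].
  - intros i Hi. rewrite mexp_msub2, H1; auto.
  - pose proof (mdeg_sum b (msub2 b j) (munit j 2) (fun i => mexp_decomp b j i H2)). rewrite mdeg_munit in H. lia.
  - intros E i. rewrite mexp_msub2. destruct (He E i) as [u Hu]. destruct (i =? j).
    + exists (u - 1)%nat. lia.
    + exists u; lia.
Qed.

Lemma good_up L K Dh b j : (j < L)%nat -> (2 <= mexp b j)%nat ->
  Good L (2*(K + Dh)) (msub2 b j) -> Good L (2*(S K + Dh)) b.
Proof.
  intros Hj H2 (H1 & Hd & He). pose proof (fun i => mexp_decomp b j i H2) as Hdc. split; [|split].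
  - intros i Hi. rewrite Hdc, H1, mexp_munit by auto. destruct (Nat.eqb_spec i j); lia.
  - pose proof (mdeg_sum b (msub2 b j) (munit j 2) Hdc). rewrite mdeg_munit in H. lia.
  - intros E i. rewrite Hdc, mexp_munit. destruct (He E i) as [u Hu]. destruct (i =? j).
    + exists (S u). lia.
    + exists u; lia.
Qed.

Lemma polya_coef L Dh G T : supp (Fm true L (2*Dh)) G -> Tprop L T -> forall K b,
  (Good L (2*(K+Dh)) b -> coef (pmul G (ppow T K)) b = kap L K b * W (phiW L b) G) /\
  (~ Good L (2*(K+Dh)) b -> coef (pmul G (ppow T K)) b = 0).
Proof.
  intros HG HT K. induction K as [|K IH]; intros b.
  - cbn [ppow]. rewrite coef_pmul_one. split.
    + intros Hb. rewrite (base_fact L Dh G b HG Hb). unfold kap. simpl fact. simpl INR.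
      field. apply Rgt_not_eq, prodR_pos; intros; apply fact_pos_R.
    + intros Hb. destruct (Req_dec (coef G b) 0); auto. exfalso; apply Hb.
      replace (0 + Dh)%nat with Dh by lia. apply HG; auto.
  - assert (Hc : coef (pmul G (ppow T (S K))) b = coef (pmul T (pmul G (ppow T K))) b).
    { cbn [ppow]. rewrite <- coef_pmul_assoc.
      rewrite (coef_pmul_l _ (pmul T G)) by (intros; apply coef_pmul_comm).
      apply coef_pmul_assoc. }
    rewrite Hc, HT. split.
    + intros Hb.
      rewrite (sumR_ext _ _ (fun j => (kap L (S K) b / INR (S K)) * (INR (half b j) * W (phiW L (msub2 b j)) G))).
      2:{ intros j Hj. apply in_seq in Hj. destruct (Nat.leb_spec 2 (mexp b j)) as [H2|H2].
          - rewrite (proj1 (IH (msub2 b j))) by (apply (good_down L K Dh b j); auto; lia).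
            assert (Hh : (1 <= half b j)%nat).
            { unfold half. revert H2. generalize (mexp b j). intros x H2. destruct x as [|[|x]]; simpl; [lia|lia|apply le_n_S, Nat.le_0_l]. }
            assert (Hk := kap_step L K b j ltac:(lia) Hh).
            assert (0 < INR (S K)) by (apply lt_0_INR; lia).
            apply (Rmult_eq_reg_r (INR (S K))); [|lra].
            transitivity (kap L K (msub2 b j) * INR (S K) * W (phiW L (msub2 b j)) G); [ring|].
            rewrite Hk. field. lra.
          - assert (Hz : half b j = 0%nat). { unfold half. revert H2. generalize (mexp b j). intros x H2. destruct x as [|[|x]]; simpl; lia. }
            rewrite Hz. simpl INR. lra. }
      rewrite sumR_scal.
      rewrite (sumR_ext _ _ (fun j => W (fun c => INR (half b j) * phiW L (msub2 b j) c) G))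
        by (intros; rewrite W_scal; auto).
      rewrite <- W_sumR.
      rewrite (W_supp _ (fun c => INR (S K) * phiW L b c)).
      * rewrite W_scal. field. apply Rgt_not_eq, lt_0_INR; lia.
      * intros c c' E. apply sumR_ext. intros j _. rewrite (phiW_inv L (msub2 b j) c c' E); auto.
      * intros c c' E. rewrite (phiW_inv L b c c' E); auto.
      * intros c Hc'. apply (sum_point L K Dh); auto.
    + intros Hb. apply sumR_zero. intros j Hj. apply in_seq in Hj.
      destruct (Nat.leb_spec 2 (mexp b j)) as [H2|H2]; auto.
      apply (proj2 (IH (msub2 b j))). intro Hg. apply Hb. apply (good_up L K Dh b j); auto; lia.
Qed.

Lemma prodR_abs_le1 l f : (forall i, In i l -> Rabs (f i) <= 1) -> Rabs (prodR l f) <= 1.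
Proof.
  unfold prodR; induction l; simpl; intros H. - rewrite Rabs_R1; lra.
  - rewrite Rabs_mult. assert (Rabs (f a) <= 1) by auto.
    assert (Rabs (fold_right (fun i acc => f i * acc) 1 l) <= 1) by auto.
    pose proof (Rabs_pos (f a)). pose proof (Rabs_pos (fold_right (fun i acc => f i * acc) 1 l)). nra.
Qed.

Lemma prod_diff l f g : (forall i, In i l -> Rabs (f i) <= 1 /\ Rabs (g i) <= 1) ->
  Rabs (prodR l f - prodR l g) <= sumR l (fun i => Rabs (f i - g i)).
Proof.
  induction l; simpl; intros H. - unfold prodR; simpl. rewrite Rminus_diag, Rabs_R0. unfold sumR; simpl; lra.
  - unfold prodR in *; unfold sumR in *; simpl.
    replace (f a * fold_right (fun i acc => f i * acc) 1 l - g a * fold_right (fun i acc => g i * acc) 1 l)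
      with ((f a - g a) * fold_right (fun i acc => f i * acc) 1 l +
             g a * (fold_right (fun i acc => f i * acc) 1 l - fold_right (fun i acc => g i * acc) 1 l)) by ring.
    eapply Rle_trans; [apply Rabs_triang|]. rewrite !Rabs_mult.
    assert (H1 : Rabs (fold_right (fun i acc => f i * acc) 1 l) <= 1).
    { apply (prodR_abs_le1 l f). intros; apply H; auto. }
    assert (H2 : Rabs (g a) <= 1) by (apply H; auto).
    assert (H3 := IHl (fun i Hi => H i (or_intror Hi))).
    pose proof (Rabs_pos (f a - g a)). pose proof (Rabs_pos (g a)).
    pose proof (Rabs_pos (fold_right (fun i acc => f i * acc) 1 l - fold_right (fun i acc => g i * acc) 1 l)).
    pose proof (Rabs_pos (fold_right (fun i acc => f i * acc) 1 l)). nra.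
Qed.

Lemma prodR_const_scal l c f : prodR l (fun i => c * f i) = c ^ length l * prodR l f.
Proof. unfold prodR; induction l; simpl; [lra|]. rewrite IHl; ring. Qed.

Lemma pow_prodR x k : x ^ k = prodR (seq 0 k) (fun _ => x).
Proof. induction k. - unfold prodR; simpl; auto. - rewrite seq_S, prodR_app, <- IHk. unfold prodR; simpl. ring. Qed.

Lemma sumN_ge_term l f j : In j l -> (f j <= sumN l f)%nat.
Proof. unfold sumN; induction l; simpl; [tauto|]. intros [->|H]; [lia|]. specialize (IHl H); lia. Qed.

Lemma sumR_le l f g : (forall i, In i l -> f i <= g i) -> sumR l f <= sumR l g.
Proof. unfold sumR; induction l; simpl; intros; [lra|]. assert (f a <= g a) by auto.
  assert (fold_right (fun i acc => f i + acc) 0 l <= fold_right (fun i acc => g i + acc) 0 l) by auto. lra. Qed.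

Lemma sumR_const l c : sumR l (fun _ => c) = INR (length l) * c.
Proof. unfold sumR; induction l; [simpl; lra|]. cbn [length fold_right]. rewrite IHl, S_INR; ring. Qed.

Definition vpt (L M : nat) (b : monom) (i : nat) : R :=
  if lt_dec i L then sqrt (INR (half b i) / INR M) else 0.

Lemma approx L Dh M b c : (1 <= M)%nat -> (Dh <= M)%nat ->
  Good L (2*M) b -> Fm true L (2*Dh) c ->
  Rabs (phiW L b c - INR M ^ Dh * meval c (vpt L M b)) <= INR Dh ^ 2 * INR M ^ Dh / INR M.
Proof.
  intros HM HDM Hb Hc.
  assert (HMp : 0 < INR M) by (apply lt_0_INR; lia).
  assert (HsB := sum_half L M b Hb). assert (HsC := sum_half L Dh c Hc).
  set (u := fun j l => (INR (half b j) - INR l) / INR M).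
  set (w := fun j (l : nat) => INR (half b j) / INR M).
  assert (E1 : phiW L b c = INR M ^ Dh * prodR (seq 0 L) (fun j => prodR (seq 0 (half c j)) (u j))).
  { unfold phiW, ff. rewrite (prodR_ext _ _ (fun j => INR M ^ (half c j) * prodR (seq 0 (half c j)) (u j))).
    - rewrite prodR_mult. rewrite prodR_scal_pow. rewrite HsC. auto.
    - intros j _. replace (INR M ^ half c j) with (INR M ^ length (seq 0 (half c j))) by (rewrite length_seq; auto).
      rewrite <- prodR_const_scal.
      apply prodR_ext. intros l _. unfold u. field. lra. }
  assert (E2 : meval c (vpt L M b) = prodR (seq 0 L) (fun j => prodR (seq 0 (half c j)) (w j))).
  { rewrite (meval_L c _ (Nat.max L (length c))) by lia.
    rewrite (seq_split L (Nat.max L (length c))) by lia. rewrite prodR_app.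
    rewrite (prodR_one (seq L _)). 2:{ intros i Hi; apply in_seq in Hi. destruct Hc as (Hc1 & _).
      rewrite Hc1 by lia. auto. }
    rewrite Rmult_1_r. apply prodR_ext. intros j Hj. apply in_seq in Hj.
    destruct Hc as (_ & _ & Hc3). rewrite (even_div2 (mexp c j)) by (apply Hc3; auto). fold (half c j).
    unfold vpt. destruct (lt_dec j L); [|lia]. rewrite pow_mult, pow2_sqrt.
    - rewrite pow_prodR. auto.
    - apply Rle_mult_inv_pos; [apply pos_INR|lra]. }
  rewrite E1, E2, <- Rmult_minus_distr_l, Rabs_mult, Rabs_right by (apply Rle_ge, pow_le; lra).
  assert (Hbnd : forall j, In j (seq 0 L) -> (half b j <= M)%nat).
  { intros j Hj. rewrite <- HsB. apply sumN_ge_term; auto. }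
  assert (Hcnd : forall j, In j (seq 0 L) -> (half c j <= Dh)%nat).
  { intros j Hj. rewrite <- HsC. apply sumN_ge_term; auto. }
  assert (Hu : forall j l, In j (seq 0 L) -> In l (seq 0 (half c j)) -> Rabs (u j l) <= 1 /\ Rabs (w j l) <= 1).
  { intros j l Hj Hl. apply in_seq in Hl. specialize (Hbnd j Hj). specialize (Hcnd j Hj).
    assert (INR (half b j) <= INR M) by (apply le_INR; auto).
    assert (INR l <= INR M) by (apply le_INR; lia). pose proof (pos_INR (half b j)). pose proof (pos_INR l).
    unfold u, w. split; apply Rabs_le; split.
    - apply (Rmult_le_reg_r (INR M)); auto. unfold Rdiv; rewrite Rmult_assoc, Rinv_l by lra. lra.
    - apply (Rmult_le_reg_r (INR M)); auto. unfold Rdiv; rewrite Rmult_assoc, Rinv_l by lra. lra.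
    - apply (Rmult_le_reg_r (INR M)); auto. unfold Rdiv; rewrite Rmult_assoc, Rinv_l by lra. lra.
    - apply (Rmult_le_reg_r (INR M)); auto. unfold Rdiv; rewrite Rmult_assoc, Rinv_l by lra. lra. }
  eapply Rle_trans.
  { apply Rmult_le_compat_l; [apply pow_le; lra|]. apply prod_diff.
    intros j Hj. split; apply prodR_abs_le1; intros l Hl; apply Hu; auto. }
  assert (Hs : sumR (seq 0 L) (fun j => Rabs (prodR (seq 0 (half c j)) (u j) - prodR (seq 0 (half c j)) (w j)))
      <= sumR (seq 0 L) (fun j => INR (half c j) * (INR Dh / INR M))).
  { apply sumR_le. intros j Hj. eapply Rle_trans; [apply prod_diff; intros; apply Hu; auto|].
    replace (INR (half c j)) with (INR (length (seq 0 (half c j)))) by (rewrite length_seq; auto).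
    rewrite <- sumR_const. apply sumR_le.
    intros l Hl. apply in_seq in Hl. unfold u, w.
    replace ((INR (half b j) - INR l) / INR M - INR (half b j) / INR M) with (- (INR l / INR M)) by (field; lra).
    rewrite Rabs_Ropp, Rabs_right.
    - apply Rmult_le_compat_r. left; apply Rinv_0_lt_compat; lra. apply le_INR. specialize (Hcnd j Hj). lia.
    - apply Rle_ge, Rle_mult_inv_pos; [apply pos_INR|lra]. }
  rewrite (sumR_ext (seq 0 L) (fun j => INR (half c j) * (INR Dh / INR M)) (fun j => (INR Dh / INR M) * INR (half c j))) in Hs by (intros; ring).
  rewrite sumR_scal, sumR_INR, HsC in Hs.
  replace (INR Dh ^ 2 * INR M ^ Dh / INR M) with (INR M ^ Dh * (INR Dh / INR M * INR Dh)) by (field; lra).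
  apply Rmult_le_compat_l; [apply pow_le; lra|]. cbv beta. lra.
Qed.

Lemma Fm_meq ev n k a a' : meq a a' = true -> Fm ev n k a -> Fm ev n k a'.
Proof.
  intros E (H1 & H2 & H3). pose proof (mdeg_meq _ _ E). rewrite meq_spec in E.
  split; [|split].
  - intros i Hi; rewrite <- E; auto.
  - lia.
  - intros e i; rewrite <- E; auto.
Qed.

Lemma polya_nonneg L Dh G T K : (1 <= Dh)%nat -> supp (Fm true L (2*Dh)) G -> Tprop L T ->
  (forall b, Good L (2*(K+Dh)) b -> INR Dh ^ 2 * Aabs G / INR (K+Dh) <= peval G (vpt L (K+Dh) b)) ->
  nonneg_coefs (pmul G (ppow T K)).
Proof.
  intros HD HG HT Hv b. destruct (polya_coef L Dh G T HG HT K b) as [P1 P2].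
  destruct (classic (Good L (2*(K+Dh)) b)) as [Hb|Hb]; [|rewrite P2; auto; lra].
  rewrite P1 by auto. apply Rmult_le_pos; [left; apply kap_pos|].
  set (M := (K + Dh)%nat). set (v := vpt L M b).
  assert (HM : 0 < INR M) by (apply lt_0_INR; unfold M; lia).
  set (psi := fun c => if excluded_middle_informative (Fm true L (2*Dh) c)
                       then phiW L b c - INR M ^ Dh * meval c v else 0).
  assert (EW : W (phiW L b) G = W (fun c => INR M ^ Dh * meval c v + psi c) G).
  { apply W_supp.
    - apply phiW_inv.
    - intros c c' E. unfold psi. rewrite (meval_meq c c' v E).
      destruct (excluded_middle_informative (Fm true L (2 * Dh) c)) as [F1|F1];
      destruct (excluded_middle_informative (Fm true L (2 * Dh) c')) as [F2|F2].
      + rewrite (phiW_inv L b c c' E); auto.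
      + exfalso; apply F2; eapply Fm_meq; eauto.
      + exfalso; apply F1; eapply Fm_meq; [rewrite meq_sym; eauto|]; auto.
      + auto.
    - intros c Hc. unfold psi. destruct (excluded_middle_informative (Fm true L (2 * Dh) c)); [lra|].
      exfalso; auto. }
  rewrite EW, W_plus, W_scal. rewrite <- peval_W.
  assert (Hpsi : Rabs (W psi G) <= (INR Dh ^ 2 * INR M ^ Dh / INR M) * Aabs G).
  { apply W_bound. intros c. unfold psi. destruct (excluded_middle_informative (Fm true L (2 * Dh) c)).
    - apply approx; auto; unfold M; lia.
    - rewrite Rabs_R0. apply Rle_mult_inv_pos; [|auto]. apply Rmult_le_pos; [apply pow_le, pos_INR|apply pow_le; lra]. }
  specialize (Hv b Hb). fold M v in Hv.
  assert (HMD : 0 < INR M ^ Dh) by (apply pow_lt; lra).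
  assert (Hab : - W psi G <= Rabs (W psi G)) by (rewrite <- Rabs_Ropp; apply Rle_abs).
  replace (INR Dh ^ 2 * INR M ^ Dh / INR M * Aabs G) with (INR M ^ Dh * (INR Dh ^ 2 * Aabs G / INR M)) in Hpsi by (field; lra).
  nra.
Qed.

Lemma vpt_props L M b : (1 <= M)%nat -> Good L (2*M) b ->
  (forall i, 0 <= vpt L M b i) /\ (forall i, (L <= i)%nat -> vpt L M b i = 0) /\
  sumR (seq 0 L) (fun i => vpt L M b i ^ 2) = 1.
Proof.
  intros HM Hb. assert (HMp : 0 < INR M) by (apply lt_0_INR; lia). split; [|split].
  - intros i; unfold vpt; destruct (lt_dec i L); [apply sqrt_pos|lra].
  - intros i Hi; unfold vpt; destruct (lt_dec i L); [lia|auto].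
  - rewrite (sumR_ext _ _ (fun i => / INR M * INR (half b i))).
    + rewrite sumR_scal, sumR_INR, (sum_half L M b Hb). field; lra.
    + intros i Hi; apply in_seq in Hi. unfold vpt. destruct (lt_dec i L); [|lia].
      rewrite pow2_sqrt. field; lra. apply Rle_mult_inv_pos; [apply pos_INR|lra].
Qed.

Lemma Fm_eqk ev n k k' P : k = k' -> supp (Fm ev n k) P -> supp (Fm ev n k') P.
Proof. intros ->; auto. Qed.

Lemma flat_map_app' {A B} (f : A -> list B) l1 l2 : flat_map f (l1 ++ l2) = flat_map f l1 ++ flat_map f l2.
Proof. induction l1; simpl; auto. rewrite IHl1, app_assoc; auto. Qed.

Lemma pmul_app_l P1 P2 X : pmul (P1 ++ P2) X = pmul P1 X ++ pmul P2 X.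
Proof. unfold pmul; apply flat_map_app'. Qed.

Lemma sumR_shift s k f : sumR (seq s k) f = sumR (seq 0 k) (fun i => f (s + i)%nat).
Proof.
  revert s f; induction k; intros s f; [reflexivity|].
  change (sumR (seq s (S k)) f) with (f s + sumR (seq (S s) k) f).
  change (sumR (seq 0 (S k)) (fun i => f (s + i)%nat)) with (f (s + 0)%nat + sumR (seq 1 k) (fun i => f (s + i)%nat)).
  rewrite IHk, (IHk 1%nat). rewrite Nat.add_0_r. f_equal. apply sumR_ext. intros; f_equal; lia.
Qed.

Lemma sumR_double n' f : sumR (seq 0 (2 * n')) f = sumR (seq 0 n') f + sumR (seq 0 n') (fun i => f (n' + i)%nat).
Proof. rewrite (seq_split n' (2*n')) by lia. rewrite sumR_app, (sumR_shift n'). replace (2*n' - n')%nat with n' by lia. reflexivity. Qed.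

Lemma coef_pmul_psum l F X b : coef (pmul (psum l F) X) b = sumR l (fun j => coef (pmul (F j) X) b).
Proof.
  induction l; simpl. - unfold pmul; simpl. unfold coef; simpl. unfold sumR; simpl; auto.
  - unfold padd. rewrite pmul_app_l, coef_app, IHl. unfold sumR; simpl; auto.
Qed.

Lemma W_sq j phi : W phi (ppow (pvar j) 2) = phi (madd (munit j 1) (madd (munit j 1) [])).
Proof. unfold ppow, pvar, pconst, pmul; simpl. lra. Qed.

Lemma coef_pmul_sq j X b : coef (pmul (ppow (pvar j) 2) X) b =
  if Nat.leb 2 (mexp b j) then coef X (msub2 b j) else 0.
Proof.
  rewrite coef_W, W_pmul, W_sq. rewrite (coef_W X).
  destruct (Nat.leb_spec 2 (mexp b j)) as [H|H].
  - apply W_ext. intros t. destruct (meq b (madd (madd (munit j 1) (madd (munit j 1) [])) t)) eqn:E1;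
    destruct (meq (msub2 b j) t) eqn:E2; auto; exfalso.
    + rewrite meq_spec in E1.
      assert (meq (msub2 b j) t = true); [|congruence]. apply meq_spec; intros i.
      rewrite mexp_msub2, E1, !mexp_madd, !mexp_munit, (mexp_over []) by (simpl; lia).
      destruct (i =? j); lia.
    + rewrite meq_spec in E2.
      assert (meq b (madd (madd (munit j 1) (madd (munit j 1) [])) t) = true); [|congruence].
      apply meq_spec; intros i. rewrite !mexp_madd, !mexp_munit, (mexp_over []) by (simpl; lia).
      rewrite <- E2, mexp_msub2. destruct (Nat.eqb_spec i j); subst; lia.
  - transitivity (W (fun _ => 0) X); [|apply W_zero]. apply W_ext. intros t.
    destruct (meq b (madd (madd (munit j 1) (madd (munit j 1) [])) t)) eqn:E1; auto.
    rewrite meq_spec in E1. specialize (E1 j). rewrite !mexp_madd, !mexp_munit, Nat.eqb_refl in E1. lia.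
Qed.

Definition Tpoly (n' : nat) : mpoly :=
  padd (psum (seq 0 n') (fun i => ppow (pvar i) 2)) (psum (seq 0 n') (fun i => ppow (pvar (n' + i)) 2)).

Lemma Tpoly_prop n' : Tprop (2 * n') (Tpoly n').
Proof.
  intros X b. unfold Tpoly, padd. rewrite pmul_app_l, coef_app, !coef_pmul_psum.
  rewrite sumR_double. f_equal; apply sumR_ext; intros; apply coef_pmul_sq.
Qed.

Definition sgm (n' : nat) (i : nat) : mpoly := psub (ppow (pvar i) 2) (ppow (pvar (n' + i)) 2).

Lemma coef_pmul_pconst1_l X a : coef (pmul (pconst 1) X) a = coef X a.
Proof. rewrite coef_pmul_comm. apply coef_pmul_one. Qed.

Definition SubL (sigma : nat -> mpoly) (a : monom) (l : list nat) (init : mpoly) : mpoly :=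
  fold_right (fun i acc => pmul (ppow (sigma i) (mexp a i)) acc) init l.

Lemma SubL_init sigma a l X Y : (forall b, coef X b = coef Y b) ->
  forall b, coef (SubL sigma a l X) b = coef (SubL sigma a l Y) b.
Proof. induction l; simpl; auto. intros H b. apply coef_pmul_r; auto. Qed.

Lemma SubL_zero sigma a l : (forall i, In i l -> mexp a i = 0%nat) ->
  forall b, coef (SubL sigma a l (pconst 1)) b = coef (pconst 1) b.
Proof.
  induction l; simpl; auto. intros H b. rewrite H by auto. cbn [ppow].
  rewrite coef_pmul_pconst1_l. apply IHl; auto.
Qed.

Lemma Sub_SubL sigma a L : (length a <= L)%nat ->
  forall b, coef (Sub sigma a) b = coef (SubL sigma a (seq 0 L) (pconst 1)) b.
Proof.
  intros H b. unfold Sub. rewrite (seq_split (length a) L) by auto. unfold SubL.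
  rewrite fold_right_app. fold (SubL sigma a (seq (length a) (L - length a)) (pconst 1)).
  fold (SubL sigma a (seq 0 (length a)) (SubL sigma a (seq (length a) (L - length a)) (pconst 1))).
  symmetry. apply SubL_init. apply SubL_zero. intros i Hi; apply in_seq in Hi; apply mexp_over; lia.
Qed.

Lemma SubL_ext sigma a a' l X : (forall i, In i l -> mexp a i = mexp a' i) -> SubL sigma a l X = SubL sigma a' l X.
Proof. induction l; simpl; intros H; auto. rewrite H, IHl; auto. Qed.

Lemma Sub_meq sigma a a' b : meq a a' = true -> coef (Sub sigma a) b = coef (Sub sigma a') b.
Proof.
  intros E. set (L := Nat.max (length a) (length a')).
  rewrite (Sub_SubL sigma a L), (Sub_SubL sigma a' L) by (unfold L; lia).
  rewrite meq_spec in E. rewrite (SubL_ext sigma a a'); auto.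
Qed.

Lemma W_pmul_pconst phi c X : W phi (pmul (pconst c) X) = c * W phi X.
Proof. rewrite W_pmul. unfold pconst; simpl. rewrite Rplus_0_r. f_equal. Qed.

Lemma W_psubst phi q sigma : W phi (psubst q sigma) = W (fun a => W phi (Sub sigma a)) q.
Proof.
  rewrite psubst_eq, W_flat_map. induction q as [|t q IH]; [reflexivity|]. cbn [fold_right].
  rewrite IH, W_pmul_pconst. reflexivity.
Qed.

Lemma supp_SubL sigma a l n' : (forall i, In i l -> supp (Fm true n' (mexp a i * 2)) (ppow (sigma i) (mexp a i))) ->
  supp (Fm true n' (sumN l (mexp a) * 2)) (SubL sigma a l (pconst 1)).
Proof.
  induction l; simpl; intros H. - apply supp_pconst_Fm.
  - eapply Fm_eqk; [|apply supp_pmul_Fm; [apply H; auto|apply IHl; auto]]. unfold sumN; simpl. lia.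
Qed.

Lemma supp_sig n' i : (i < n')%nat -> supp (Fm true (2*n') 2) (sgm n' i).
Proof.
  intros H. unfold sgm. apply supp_psub; apply supp_pvarpow_Fm; try lia; intros _; exists 1%nat; lia.
Qed.

Lemma supp_Sub n' k a : Fm false n' k a -> supp (Fm true (2*n') (2*k)) (Sub (sgm n') a).
Proof.
  intros (H1 & H2 & _) b Hb. rewrite (Sub_SubL _ a (length a)) in Hb by lia.
  revert b Hb. apply Fm_eqk with (k := (sumN (seq 0 (length a)) (mexp a) * 2)%nat).
  - rewrite <- (mdeg_L a (length a)) by lia. lia.
  - apply supp_SubL. intros i _. destruct (lt_dec i n').
    + apply supp_ppow_Fm, supp_sig; auto.
    + rewrite H1 by lia. cbn [ppow]. apply supp_pconst_Fm.
Qed.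

Lemma supp_psubst n' k q : supp (Fm false n' k) q -> supp (Fm true (2*n') (2*k)) (psubst q (sgm n')).
Proof.
  intros Hq b Hb. destruct (classic (Fm true (2*n') (2*k) b)) as [|Hn]; auto. exfalso. apply Hb.
  rewrite coef_W, W_psubst. apply W_vanish.
  - intros a a' E. rewrite <- !coef_W. apply Sub_meq; auto.
  - intros a Ha. rewrite <- coef_W. destruct (Req_dec (coef (Sub (sgm n') a) b) 0); auto.
    exfalso; apply Hn. apply (supp_Sub n' k a); auto.
Qed.

Definition Slack (n' d' : nat) : mpoly :=
  ppow (psum (seq 0 n') (fun i => padd (ppow (pvar i) 4) (ppow (pvar (n' + i)) 4))) d'.

Lemma supp_Slack n' d' : supp (Fm true (2*n') (2*(2*d'))) (Slack n' d').
Proof.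
  unfold Slack. eapply Fm_eqk; [|apply (supp_ppow_Fm _ _ 4)]. lia.
  apply supp_psum. intros i Hi; apply in_seq in Hi. apply supp_padd; apply supp_pvarpow_Fm; try lia;
  intros _; exists 2%nat; lia.
Qed.

Definition Gpoly (r n' d' : nat) (q : mpoly) : mpoly :=
  padd (psubst q (sgm n')) (pscale (1 / (2 * INR r)) (Slack n' d')).

Lemma Pol_unfold r n' d' q : Pol r n' d' q <->
  is_form n' (2 * d') q /\ nonneg_coefs (pmul (Gpoly r n' d' q) (ppow (Tpoly n') (r * r))).
Proof. reflexivity. Qed.

Lemma supp_Gpoly r n' d' q : supp (Fm false n' (2*d')) q -> supp (Fm true (2*n') (2*(2*d'))) (Gpoly r n' d' q).
Proof. intros H. unfold Gpoly. apply supp_padd. - apply supp_psubst; auto. - apply supp_pscale, supp_Slack. Qed.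

Lemma peval_Gpoly r n' d' q v : peval (Gpoly r n' d' q) v =
  peval q (fun i => v i ^ 2 - v (n' + i)%nat ^ 2) +
  1 / (2 * INR r) * (sumR (seq 0 n') (fun i => v i ^ 4 + v (n' + i)%nat ^ 4)) ^ d'.
Proof.
  unfold Gpoly, padd. rewrite peval_app, peval_pscale, peval_psubst. unfold Slack.
  rewrite peval_ppow, peval_psum. f_equal.
  - f_equal. apply functional_extensionality. intros i. unfold sgm. rewrite peval_psub, !peval_ppow, !peval_pvar; auto.
  - f_equal. f_equal. apply sumR_ext. intros i _. unfold padd. rewrite peval_app, !peval_ppow, !peval_pvar; auto.
Qed.

Lemma Aabs_app P Q : Aabs (P ++ Q) = Aabs P + Aabs Q.
Proof. induction P; simpl; [lra|]. rewrite IHP; lra. Qed.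
Lemma Aabs_pscale c P : Aabs (pscale c P) = Rabs c * Aabs P.
Proof. induction P; simpl; [lra|]. rewrite IHP, Rabs_mult; lra. Qed.
Lemma Aabs_pmul_pconst c X : Aabs (pmul (pconst c) X) = Rabs c * Aabs X.
Proof. unfold pmul, pconst; simpl. rewrite app_nil_r. induction X; simpl; [lra|]. rewrite IHX, Rabs_mult; lra. Qed.
Lemma Aabs_psubst_app P Q sigma : Aabs (psubst (P ++ Q) sigma) = Aabs (psubst P sigma) + Aabs (psubst Q sigma).
Proof. rewrite !psubst_eq, flat_map_app', Aabs_app; auto. Qed.
Lemma Aabs_psubst_scale c P sigma : Aabs (psubst (pscale c P) sigma) = Rabs c * Aabs (psubst P sigma).
Proof.
  rewrite !psubst_eq. induction P as [|t P IH]; [simpl; lra|]. unfold pscale in *.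
  cbn [map flat_map fst snd]. rewrite !Aabs_app, IH, !Aabs_pmul_pconst, Rabs_mult. lra.
Qed.

Lemma cs_ineq k a : (1 <= k)%nat ->
  (sumR (seq 0 k) a) ^ 2 / INR k <= sumR (seq 0 k) (fun j => a j ^ 2).
Proof.
  intros Hk. set (s := sumR (seq 0 k) a). assert (HK : 0 < INR k) by (apply lt_0_INR; lia).
  assert (H0 : 0 <= sumR (seq 0 k) (fun j => (a j - s / INR k) ^ 2)).
  { rewrite <- (sumR_zero (seq 0 k) (fun _ => 0)) by auto. apply sumR_le. intros; apply pow2_ge_0. }
  rewrite (sumR_ext _ _ (fun j => a j ^ 2 + ((-2 * (s / INR k)) * a j + (s / INR k) ^ 2))) in H0 by (intros; ring).
  rewrite sumR_plus, sumR_plus, sumR_scal, sumR_const, length_seq in H0. fold s in H0.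
  replace (INR k * (s / INR k) ^ 2) with (s ^ 2 / INR k) in H0 by (field; lra).
  replace (-2 * (s / INR k) * s) with (-2 * (s ^ 2 / INR k)) in H0 by (field; lra). lra.
Qed.

Definition Zpoly (n' d' : nat) : mpoly := ppow (psum (seq 0 n') (fun i => ppow (pvar i) 2)) d'.
Definition qpoly (r n' d' : nat) (f : mpoly) : mpoly := psub f (pscale (1 / INR r) (Zpoly n' d')).

Lemma supp_Zpoly n' d' : supp (Fm false n' (2*d')) (Zpoly n' d').
Proof. unfold Zpoly. eapply Fm_eqk; [|apply (supp_ppow_Fm _ _ 2)]. lia.
  apply supp_psum. intros i Hi; apply in_seq in Hi. apply supp_pvarpow_Fm; try lia; discriminate. Qed.

Lemma peval_Zpoly n' d' z : peval (Zpoly n' d') z = (sumR (seq 0 n') (fun i => z i ^ 2)) ^ d'.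
Proof. unfold Zpoly. rewrite peval_ppow, peval_psum. f_equal. apply sumR_ext. intros; rewrite peval_ppow, peval_pvar; auto. Qed.

Lemma is_form_supp n k P : supp (Fm false n k) P -> is_form n k P.
Proof. intros H. split. - intros a Ha; apply H; auto. - intros a Ha; apply H; auto. Qed.

Lemma pol_eventually n' d' f : (1 <= n')%nat -> (1 <= d')%nat -> supp (Fm false n' (2*d')) f ->
  (exists c, 0 < c /\ forall z, c * (sumR (seq 0 n') (fun i => z i ^ 2)) ^ d' <= peval f z) ->
  exists r0, forall r, (r0 <= r)%nat -> Pol r n' d' (qpoly r n' d' f).
Proof.
  intros Hn Hd Hf (c & Hc & Hcf).
  set (B0 := Aabs (psubst f (sgm n')) + Aabs (psubst (Zpoly n' d') (sgm n')) + Aabs (Slack n' d')).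
  set (e := (1 / (2 * INR n')) ^ d').
  assert (Hn' : 0 < INR n') by (apply lt_0_INR; lia).
  assert (He : 0 < e) by (apply pow_lt; apply Rdiv_lt_0_compat; lra).
  destruct (INR_unbounded (1 / c)) as [k1 Hk1].
  destruct (INR_unbounded (8 * INR d' ^ 2 * B0 / e)) as [k2 Hk2].
  exists (S (Nat.max k1 k2)). intros r Hr.
  assert (Hr1 : (1 <= r)%nat) by lia.
  assert (HrR : 1 <= INR r) by (apply (le_INR 1); lia).
  assert (Hrk1 : 1 / c < INR r) by (apply Rlt_le_trans with (INR k1); [lra|apply le_INR; lia]).
  assert (Hrk2 : 8 * INR d' ^ 2 * B0 / e < INR r) by (apply Rlt_le_trans with (INR k2); [lra|apply le_INR; lia]).
  assert (Hq : supp (Fm false n' (2*d')) (qpoly r n' d' f)).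
  { unfold qpoly. apply supp_psub; auto. apply supp_pscale, supp_Zpoly. }
  apply Pol_unfold. split; [apply is_form_supp; auto|].
  apply (polya_nonneg (2*n') (2*d')); [lia|apply supp_Gpoly; auto|apply Tpoly_prop|].
  intros b Hb.
  set (M := (r * r + 2 * d')%nat) in *.
  destruct (vpt_props (2*n') M b ltac:(unfold M; lia) Hb) as (Hv0 & Hv1 & Hv2).
  set (v := vpt (2 * n') M b) in *.
  assert (HA : Aabs (Gpoly r n' d' (qpoly r n' d' f)) <= B0).
  { unfold Gpoly, qpoly, psub, padd. rewrite Aabs_app, Aabs_pscale, Aabs_psubst_app, Aabs_psubst_scale,
      Aabs_psubst_scale. unfold B0.
    assert (0 <= Aabs (psubst (Zpoly n' d') (sgm n'))) by apply Aabs_nonneg.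
    assert (0 <= Aabs (Slack n' d')) by apply Aabs_nonneg.
    rewrite (Rabs_right (1 / (2 * INR r))) by (apply Rle_ge, Rlt_le, Rdiv_lt_0_compat; lra).
    rewrite (Rabs_right (1 / INR r)) by (apply Rle_ge, Rlt_le, Rdiv_lt_0_compat; lra).
    replace (Rabs (-1)) with 1 by (rewrite Rabs_left; lra).
    assert (1 / INR r <= 1) by (apply (Rmult_le_reg_r (INR r)); [lra|]; field_simplify; lra).
    assert (1 / (2 * INR r) <= 1) by (apply (Rmult_le_reg_r (2 * INR r)); [lra|]; field_simplify; lra).
    nra. }
  rewrite peval_Gpoly. unfold qpoly. rewrite peval_psub, peval_pscale, peval_Zpoly.
  set (z := fun i => v i ^ 2 - v (n' + i)%nat ^ 2).
  set (Y := sumR (seq 0 n') (fun i => z i ^ 2)).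
  assert (HY : 0 <= Y) by (unfold Y; rewrite <- (sumR_zero (seq 0 n') (fun _ => 0)) by auto;
    apply sumR_le; intros; apply pow2_ge_0).
  assert (Hfz := Hcf z). fold Y in Hfz.
  assert (HYd : 0 <= Y ^ d') by (apply pow_le; auto).
  assert (Hcr : 1 / INR r <= c).
  { assert (1 < c * INR r) by (replace 1 with (c * (1/c)) by (field; lra); apply Rmult_lt_compat_l; lra).
    apply (Rmult_le_reg_r (INR r)); [lra|]. replace (1 / INR r * INR r) with 1 by (field; lra). lra. }
  assert (Hq0 : 0 <= peval f z - 1 / INR r * Y ^ d') by nra.
  set (S := sumR (seq 0 n') (fun i => v i ^ 4 + v (n' + i)%nat ^ 4)).
  assert (HS : 1 / (2 * INR n') <= S).
  { unfold S. rewrite sumR_plus, <- sumR_double.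
    rewrite (sumR_ext _ _ (fun j => (v j ^ 2) ^ 2)) by (intros; ring).
    eapply Rle_trans; [|apply cs_ineq; lia]. rewrite Hv2, mult_INR. replace (INR 2) with 2 by (simpl; lra). right; field; lra. }
  assert (HSd : e <= S ^ d') by (apply pow_incr; split; auto; apply Rlt_le, Rdiv_lt_0_compat; lra).
  assert (HM : INR (r * r) <= INR M) by (apply le_INR; unfold M; lia).
  rewrite mult_INR in HM.
  assert (HMp : 0 < INR M) by nra.
  assert (HA0 : 0 <= Aabs (Gpoly r n' d' (qpoly r n' d' f))) by apply Aabs_nonneg.
  assert (HB0 : 0 <= B0) by lra.
  assert (Hkey : INR (2 * d') ^ 2 * B0 / (INR r * INR r) <= 1 / (2 * INR r) * e).
  { assert (H8 : 8 * INR d' ^ 2 * B0 < INR r * e).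
    { apply (Rmult_lt_compat_r e) in Hrk2; auto. unfold Rdiv in Hrk2.
      rewrite Rmult_assoc, Rinv_l in Hrk2 by lra. lra. }
    replace (INR (2*d')) with (2 * INR d') by (rewrite mult_INR; simpl; lra).
    replace ((2 * INR d') ^ 2 * B0 / (INR r * INR r)) with ((8 * INR d' ^ 2 * B0) / (2 * INR r * INR r)) by (field; lra).
    replace (1 / (2 * INR r) * e) with ((INR r * e) / (2 * INR r * INR r)) by (field; lra).
    unfold Rdiv. apply Rmult_le_compat_r; [left; apply Rinv_0_lt_compat; nra|lra]. }
  assert (Hlhs : INR (2 * d') ^ 2 * Aabs (Gpoly r n' d' (qpoly r n' d' f)) / INR M <=
                 INR (2 * d') ^ 2 * B0 / (INR r * INR r)).
  { unfold Rdiv. apply Rmult_le_compat.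
    - apply Rmult_le_pos; auto. apply pow_le, pos_INR.
    - left; apply Rinv_0_lt_compat; auto.
    - apply Rmult_le_compat_l; auto. apply pow_le, pos_INR.
    - apply Rinv_le_contravar; nra. }
  assert (1 / (2 * INR r) * e <= 1 / (2 * INR r) * S ^ d').
  { apply Rmult_le_compat_l; auto. apply Rlt_le, Rdiv_lt_0_compat; lra. }
  change (sumR (seq 0 n') (fun i => (v i ^ 2 - v (n' + i)%nat ^ 2) ^ 2)) with Y.
  change (psub f (pscale (1 / INR r) (Zpoly n' d'))) with (qpoly r n' d' f).
  fold S. lra.
Qed.

Lemma cv_const c : Un_cv (fun _ => c) c.
Proof. intros eps He. exists 0%nat. intros. unfold Rdist. rewrite Rminus_diag, Rabs_R0; lra. Qed.

Lemma cv_pow (a : nat -> R) l k : Un_cv a l -> Un_cv (fun n => a n ^ k) (l ^ k).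
Proof. intros H. induction k; simpl. - apply cv_const. - apply CV_mult; auto. Qed.

Lemma cv_prodR (u : nat -> nat -> R) (l : nat -> R) L :
  (forall i, Un_cv (fun k => u k i) (l i)) -> Un_cv (fun k => prodR L (u k)) (prodR L l).
Proof. intros H. unfold prodR; induction L; simpl. - apply cv_const. - apply CV_mult; auto. Qed.

Lemma peval_cv P (u : nat -> nat -> R) (l : nat -> R) :
  (forall i, Un_cv (fun k => u k i) (l i)) -> Un_cv (fun k => peval P (u k)) (peval P l).
Proof.
  intros H. induction P as [|t P IH]; simpl.
  - apply cv_const.
  - apply CV_plus; auto. apply CV_mult; [apply cv_const|]. unfold meval.
    apply (cv_prodR (fun k i => u k i ^ mexp (snd t) i) (fun i => l i ^ mexp (snd t) i)).
    intros i; apply cv_pow; auto.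
Qed.

Lemma cv_sumR (u : nat -> nat -> R) (l : nat -> R) L :
  (forall i, Un_cv (fun k => u k i) (l i)) -> Un_cv (fun k => sumR L (u k)) (sumR L l).
Proof. intros H. unfold sumR; induction L; simpl. - apply cv_const. - apply CV_plus; auto. Qed.

Definition sincr (phi : nat -> nat) : Prop := forall k, (phi k < phi (S k))%nat.

Lemma sincr_ge phi : sincr phi -> forall k, (k <= phi k)%nat.
Proof. intros H k; induction k; [lia|]. specialize (H k); lia. Qed.

Lemma sincr_mono phi : sincr phi -> forall a b, (a <= b)%nat -> (phi a <= phi b)%nat.
Proof. intros H a b Hab; induction Hab; auto. specialize (H m); lia. Qed.

Lemma sincr_comp phi psi : sincr phi -> sincr psi -> sincr (fun k => phi (psi k)).
Proof.
  intros H1 H2 k. specialize (H2 k). assert (forall a b, (a < b)%nat -> (phi a < phi b)%nat).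
  { intros a b Hab. apply Nat.lt_le_trans with (phi (S a)); [apply H1|apply sincr_mono; auto]. }
  auto.
Qed.

Lemma cv_sub (a : nat -> R) l psi : sincr psi -> Un_cv a l -> Un_cv (fun k => a (psi k)) l.
Proof.
  intros Hs H eps He. destruct (H eps He) as [N HN]. exists N. intros n Hn.
  apply HN. pose proof (sincr_ge psi Hs n). lia.
Qed.

Lemma small_inv eps : 0 < eps -> exists k0 : nat, forall k, (k0 <= k)%nat -> 1 / INR (S k) < eps.
Proof.
  intros He. destruct (INR_unbounded (1 / eps)) as [k0 Hk0]. exists k0. intros k Hk.
  assert (INR k0 <= INR k) by (apply le_INR; auto). rewrite S_INR.
  assert (1 / eps < INR k + 1) by lra.
  apply (Rmult_lt_reg_r (INR k + 1)). pose proof (pos_INR k); lra.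
  replace (1 / (INR k + 1) * (INR k + 1)) with 1 by (field; pose proof (pos_INR k); lra).
  apply (Rmult_lt_reg_l (/ eps)). apply Rinv_0_lt_compat; auto.
  replace (/ eps * 1) with (1 / eps) by (field; lra).
  replace (/ eps * (eps * (INR k + 1))) with (INR k + 1) by (field; lra). auto.
Qed.

Lemma abs_le1 x : Rabs x <= 1 -> -1 <= x <= 1.
Proof. unfold Rabs; destruct (Rcase_abs x); lra. Qed.

Fixpoint mkseq (g : nat -> nat -> nat) (k : nat) : nat :=
  match k with O => g 0%nat 0%nat | S k' => g (S (mkseq g k')) (S k') end.

Lemma bw1 (a : nat -> R) : (forall k, Rabs (a k) <= 1) ->
  exists psi, sincr psi /\ exists L, Un_cv (fun k => a (psi k)) L.
Proof.
  intros Ha. destruct (Bolzano_Weierstrass a (fun c => -1 <= c <= 1) (compact_P3 (-1) 1)) as [L HL].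
  { intros k; apply abs_le1; auto. }
  assert (Hex : forall N k, exists p, (N <= p)%nat /\ Rabs (a p - L) < 1 / INR (S k)).
  { intros N k. assert (Hp : 0 < 1 / INR (S k)) by (apply Rdiv_lt_0_compat; [lra|apply lt_0_INR; lia]).
    destruct (HL (disc L (mkposreal _ Hp)) N) as [p [Hp1 Hp2]].
    - exists (mkposreal _ Hp). intros y Hy; auto.
    - exists p. split; auto. }
  set (g := fun N k => proj1_sig (constructive_indefinite_description _ (Hex N k))).
  assert (Hg : forall N k, (N <= g N k)%nat /\ Rabs (a (g N k) - L) < 1 / INR (S k)).
  { intros N k. unfold g. destruct (constructive_indefinite_description _ (Hex N k)); auto. }
  exists (mkseq g). split.
  - intros k. simpl. destruct (Hg (S (mkseq g k)) (S k)); lia.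
  - exists L. intros eps He. destruct (small_inv eps He) as [k0 Hk0]. exists k0. intros k Hk.
    unfold Rdist. assert (Rabs (a (mkseq g k) - L) < 1 / INR (S k)).
    { destruct k; simpl; apply Hg. }
    specialize (Hk0 k Hk). lra.
Qed.

Lemma bw_multi (u : nat -> nat -> R) : (forall k i, Rabs (u k i) <= 1) -> forall n,
  exists phi, sincr phi /\ exists l : nat -> R, forall i, (i < n)%nat -> Un_cv (fun k => u (phi k) i) (l i).
Proof.
  intros Hu n. induction n.
  - exists (fun k => k). split; [intros k; lia|]. exists (fun _ => 0). intros; lia.
  - destruct IHn as (phi & Hphi & l & Hl).
    destruct (bw1 (fun k => u (phi k) n)) as (psi & Hpsi & L & HL); [intros; apply Hu|].
    exists (fun k => phi (psi k)). split; [apply sincr_comp; auto|].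
    exists (fun i => if Nat.eqb i n then L else l i). intros i Hi.
    destruct (Nat.eqb_spec i n).
    + subst; auto.
    + apply (cv_sub (fun k => u (phi k) i)); auto. apply Hl; lia.
Qed.

Lemma sumR_sq_nonneg l z : 0 <= sumR l (fun i => z i ^ 2).
Proof. induction l; [unfold sumR; simpl; lra|].
  change (sumR (a :: l) (fun i => z i ^ 2)) with (z a ^ 2 + sumR l (fun i => z i ^ 2)).
  pose proof (pow2_ge_0 (z a)); lra. Qed.

Lemma sumR_sq_zero l z : sumR l (fun i => z i ^ 2) = 0 -> forall i, In i l -> z i = 0.
Proof.
  induction l; [simpl; tauto|]. intros H i Hi.
  change (sumR (a :: l) (fun i => z i ^ 2)) with (z a ^ 2 + sumR l (fun i => z i ^ 2)) in H.
  pose proof (pow2_ge_0 (z a)). pose proof (sumR_sq_nonneg l z).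
  destruct Hi as [<-|Hi].
  - assert (z a ^ 2 = 0) by lra. nra.
  - apply IHl; auto. lra.
Qed.

Lemma sq_le1 x : x ^ 2 <= 1 -> Rabs x <= 1.
Proof. intros H. unfold Rabs; destruct (Rcase_abs x); nra. Qed.

Lemma term_le_sumR l z j : In j l -> z j ^ 2 <= sumR l (fun i => z i ^ 2).
Proof.
  induction l; [simpl; tauto|]. intros [<-|Hj];
  change (sumR (a :: l) (fun i => z i ^ 2)) with (z a ^ 2 + sumR l (fun i => z i ^ 2)).
  - pose proof (sumR_sq_nonneg l z); lra.
  - pose proof (pow2_ge_0 (z a)); specialize (IHl Hj); lra.
Qed.

Lemma compact_bound N d' f : (1 <= d')%nat -> supp (Fm false N (2*d')) f ->
  (forall z, sumR (seq 0 N) (fun i => z i ^ 2) <> 0 -> 0 < peval f z) ->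
  exists c, 0 < c /\ forall z, c * (sumR (seq 0 N) (fun i => z i ^ 2)) ^ d' <= peval f z.
Proof.
  intros Hd Hf Hpos. destruct (classic (exists c, 0 < c /\ forall z, c * (sumR (seq 0 N) (fun i => z i ^ 2)) ^ d' <= peval f z)) as [|Hn]; auto.
  exfalso. set (nrm := fun z : nat -> R => sumR (seq 0 N) (fun i => z i ^ 2)).
  assert (Hvars : in_vars N f) by (intros a Ha; apply Hf; auto).
  assert (Hk : forall k, exists z, peval f z < 1 / INR (S k) * nrm z ^ d').
  { intros k. destruct (classic (exists z, peval f z < 1 / INR (S k) * nrm z ^ d')) as [|Hn2]; auto.
    exfalso; apply Hn. exists (1 / INR (S k)). split; [apply Rdiv_lt_0_compat; [lra|apply lt_0_INR; lia]|].
    intros z. apply Rnot_lt_le. intro; apply Hn2; exists z; auto. }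
  set (zs := fun k => proj1_sig (constructive_indefinite_description _ (Hk k))).
  assert (Hzs : forall k, peval f (zs k) < 1 / INR (S k) * nrm (zs k) ^ d').
  { intros k. unfold zs. destruct (constructive_indefinite_description _ (Hk k)); auto. }
  assert (Hnz : forall k, 0 < nrm (zs k)).
  { intros k. destruct (Rle_lt_or_eq_dec 0 (nrm (zs k))) as [|E]; [apply sumR_sq_nonneg|auto|].
    exfalso. specialize (Hzs k). rewrite <- E in Hzs. rewrite pow_i in Hzs by lia. rewrite Rmult_0_r in Hzs.
    assert (peval f (zs k) = peval f (fun i => 0 * zs k i)).
    { apply (peval_vars N); auto. intros i Hi. rewrite (sumR_sq_zero (seq 0 N) (zs k)); [lra|auto|apply in_seq; lia]. }
    rewrite (peval_scale false N (2*d')) in H by auto. rewrite pow_i in H by lia. lra. }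
  set (u := fun k i => if lt_dec i N then zs k i / sqrt (nrm (zs k)) else 0).
  assert (Hsq : forall k, 0 < sqrt (nrm (zs k))) by (intros; apply sqrt_lt_R0; auto).
  assert (Hu1 : forall k i, Rabs (u k i) <= 1).
  { intros k i. unfold u. destruct (lt_dec i N).
    - apply sq_le1. unfold Rdiv. rewrite Rpow_mult_distr, pow_inv, pow2_sqrt by (apply Rlt_le, Hnz).
      apply (Rmult_le_reg_r (nrm (zs k))); [apply Hnz|]. rewrite Rmult_assoc, Rinv_l by (apply Rgt_not_eq, Hnz).
      rewrite Rmult_1_l, Rmult_1_r. unfold nrm. apply term_le_sumR, in_seq; lia.
    - rewrite Rabs_R0; lra. }
  assert (Hun : forall k, nrm (u k) = 1).
  { intros k. unfold nrm at 1. rewrite (sumR_ext _ _ (fun i => / nrm (zs k) * zs k i ^ 2)).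
    - rewrite sumR_scal. fold (nrm (zs k)). field. apply Rgt_not_eq, Hnz.
    - intros i Hi. apply in_seq in Hi. unfold u. destruct (lt_dec i N); [|lia].
      unfold Rdiv. rewrite Rpow_mult_distr, pow_inv, pow2_sqrt by (apply Rlt_le, Hnz). ring. }
  assert (Huf : forall k, peval f (u k) < 1 / INR (S k)).
  { intros k. assert (E : peval f (u k) = peval f (fun i => / sqrt (nrm (zs k)) * zs k i)).
    { apply (peval_vars N); auto. intros i Hi. unfold u. destruct (lt_dec i N); [|lia]. unfold Rdiv; ring. }
    rewrite E, (peval_scale false N (2*d')) by auto.
    rewrite pow_mult, pow_inv, pow2_sqrt by (apply Rlt_le, Hnz).
    specialize (Hzs k). assert (0 < nrm (zs k) ^ d') by (apply pow_lt; auto).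
    rewrite pow_inv. apply (Rmult_lt_reg_r (nrm (zs k) ^ d')); auto.
    replace (/ nrm (zs k) ^ d' * peval f (zs k) * nrm (zs k) ^ d') with (peval f (zs k)) by (field; lra).
    lra. }
  destruct (bw_multi u Hu1 N) as (phi & Hphi & l & Hl).
  set (l' := fun i => if lt_dec i N then l i else 0).
  assert (Hl' : forall i, Un_cv (fun k => u (phi k) i) (l' i)).
  { intros i. unfold l'. destruct (lt_dec i N); auto.
    replace (fun k => u (phi k) i) with (fun _ : nat => 0). apply cv_const.
    apply functional_extensionality. intros k. unfold u. destruct (lt_dec i N); auto; lia. }
  assert (Hnl : nrm l' = 1).
  { apply (UL_sequence (fun k => nrm (u (phi k)))).
    - unfold nrm. apply (cv_sumR (fun k i => u (phi k) i ^ 2) (fun i => l' i ^ 2)). intros; apply cv_pow; auto.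
    - replace (fun k => nrm (u (phi k))) with (fun _ : nat => 1). apply cv_const.
      apply functional_extensionality. intros; rewrite Hun; auto. }
  assert (Hp : 0 < peval f l') by (apply Hpos; fold (nrm l'); lra).
  assert (Hcv := peval_cv f (fun k => u (phi k)) l' Hl').
  destruct (Hcv (peval f l' / 2)) as [K1 HK1]; [lra|].
  destruct (small_inv (peval f l' / 2)) as [k0 Hk0]; [lra|].
  set (k := Nat.max K1 k0).
  specialize (HK1 k ltac:(unfold k; lia)). unfold Rdist in HK1.
  assert (Hk0' := Hk0 (phi k) ltac:(pose proof (sincr_ge phi Hphi k); unfold k in *; lia)).
  specialize (Huf (phi k)). apply Rabs_def2 in HK1. lra.
Qed.


Lemma supp_pmul_pconst ev n k c P : supp (Fm ev n k) P -> supp (Fm ev n k) (pmul (pconst c) P).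
Proof. intros H. eapply Fm_eqk; [|apply supp_pmul_Fm; [apply supp_pconst_Fm|apply H]]. lia. Qed.

Lemma supp_f n m d Rad eta beta p g gam : (1 <= d)%nat ->
  in_vars n p -> (forall i, (1 <= i <= m)%nat -> in_vars n (g i)) ->
  (forall a, coef p a <> 0 -> (mdeg a <= 2 * d)%nat) ->
  (forall i a, (1 <= i <= m)%nat -> coef (g i) a <> 0 -> (mdeg a <= 2 * d)%nat) ->
  supp (Fm false (n + m + 3) (2 * (2 * d))) (f_gamma n m d Rad eta beta p g gam).
Proof.
  intros Hd Hp Hg Hdp Hdg. set (N := (n + m + 3)%nat).
  assert (Hv : forall i k, (i < N)%nat -> supp (Fm false N k) (ppow (pvar i) k)).
  { intros i k Hi. apply supp_pvarpow_Fm; auto; discriminate. }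
  assert (Hh : forall q, in_vars n q -> (forall a, coef q a <> 0 -> (mdeg a <= 2 * d)%nat) ->
                supp (Fm false N (2 * d)) (homog (2 * d) (n + m + 2) q)).
  { intros q H1 H2. replace N with (S (n + m + 2)) by (unfold N; lia). apply (supp_homog n); auto; lia. }
  assert (Hsy : forall j, (j <= m)%nat -> supp (Fm false N (2 * d)) (pmul (ppow (pvar (n + j)) 2) (ppow (pvar (n + m + 2)) (2 * d - 2)))).
  { intros j Hj. eapply Fm_eqk; [|apply supp_pmul_Fm; apply Hv; unfold N; lia]. lia. }
  unfold f_gamma. cbv zeta. apply supp_padd; [|apply supp_padd].
  - apply supp_ppow_Fm. apply supp_psub; [apply supp_psub|].
    + apply supp_pmul_pconst. apply Hv; unfold N; lia.
    + apply Hh; auto.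
    + apply Hsy; lia.
  - apply supp_psum. intros i Hi; apply in_seq in Hi. apply supp_ppow_Fm. apply supp_psub.
    + apply Hh; [apply Hg; lia|]. intros a Ha; apply (Hdg i); auto; lia.
    + apply Hsy; lia.
  - apply supp_ppow_Fm. apply supp_psub; [apply supp_psub|].
    + apply supp_pmul_pconst. apply Hv; unfold N; lia.
    + eapply Fm_eqk; [|apply (supp_ppow_Fm _ _ 2)]; [lia|]. apply supp_padd; apply supp_psum.
      * intros i Hi; apply in_seq in Hi. apply Hv. unfold N; lia.
      * intros j Hj; apply in_seq in Hj. apply Hv. unfold N; lia.
    + apply Hv. unfold N; lia.
Qed.

Lemma peval_f n m d Rad eta beta p g gam z :
  peval (f_gamma n m d Rad eta beta p g gam) z =
  (gam * z (n + m + 2)%nat ^ (2 * d) - peval (homog (2 * d) (n + m + 2) p) z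
     - z (n + 0)%nat ^ 2 * z (n + m + 2)%nat ^ (2 * d - 2)) ^ 2
  + sumR (seq 1 m) (fun i => (peval (homog (2 * d) (n + m + 2) (g i)) z
     - z (n + i)%nat ^ 2 * z (n + m + 2)%nat ^ (2 * d - 2)) ^ 2)
  + ((Rad + sumR (seq 1 m) eta + beta + gam) ^ d * z (n + m + 2)%nat ^ (2 * d)
     - (sumR (seq 0 n) (fun i => z i ^ 2) + sumR (seq 0 (m + 1)) (fun j => z (n + j)%nat ^ 2)) ^ d
     - z (n + (m + 1))%nat ^ (2 * d)) ^ 2.
Proof.
  unfold f_gamma. cbv zeta. unfold padd. rewrite !peval_app.
  rewrite !peval_ppow, !peval_psub, !peval_pmul, !peval_pconst, !peval_ppow, !peval_pvar, peval_psum.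
  rewrite peval_app, !peval_psum.
  assert (E1 : sumR (seq 1 m) (fun i => peval (ppow (psub (homog (2 * d) (n + m + 2) (g i))
              (pmul (ppow (pvar (n + i)) 2) (ppow (pvar (n + m + 2)) (2 * d - 2)))) 2) z) =
     sumR (seq 1 m) (fun i => (peval (homog (2 * d) (n + m + 2) (g i)) z
     - z (n + i)%nat ^ 2 * z (n + m + 2)%nat ^ (2 * d - 2)) ^ 2)).
  { apply sumR_ext. intros i _. rewrite peval_ppow, peval_psub, peval_pmul, !peval_ppow, !peval_pvar. auto. }
  assert (E2 : sumR (seq 0 n) (fun i => peval (ppow (pvar i) 2) z) = sumR (seq 0 n) (fun i => z i ^ 2)).
  { apply sumR_ext. intros; rewrite peval_ppow, peval_pvar; auto. }
  assert (E3 : sumR (seq 0 (m + 1)) (fun j => peval (ppow (pvar (n + j)) 2) z) = sumR (seq 0 (m + 1)) (fun j => z (n + j)%nat ^ 2)).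
  { apply sumR_ext. intros; rewrite peval_ppow, peval_pvar; auto. }
  rewrite E1, E2, E3. ring.
Qed.

Lemma sumR_split_N n m z : sumR (seq 0 (n + m + 3)) (fun i => z i ^ 2) =
  sumR (seq 0 n) (fun i => z i ^ 2) + sumR (seq 0 (m + 1)) (fun j => z (n + j)%nat ^ 2)
  + z (n + (m + 1))%nat ^ 2 + z (n + m + 2)%nat ^ 2.
Proof.
  replace (n + m + 3)%nat with (n + ((m + 1) + 1 + 1))%nat by lia.
  rewrite seq_app, sumR_app, (sumR_shift n). rewrite !seq_app, !sumR_app. simpl.
  unfold sumR; simpl. replace (n + (m + 1 + 1))%nat with (n + m + 2)%nat by lia. ring.
Qed.

Lemma pow_pos_zero x k : (1 <= k)%nat -> 0 <= x -> x ^ k = 0 -> x = 0.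
Proof. intros Hk Hx H. destruct (Rle_lt_or_eq_dec 0 x Hx); auto. assert (0 < x ^ k) by (apply pow_lt; auto). lra. Qed.

Lemma f_pos n m d Rad eta beta p g gam : (1 <= d)%nat ->
  in_vars n p -> (forall i, (1 <= i <= m)%nat -> in_vars n (g i)) ->
  (forall a, coef p a <> 0 -> (mdeg a <= 2 * d)%nat) ->
  (forall i a, (1 <= i <= m)%nat -> coef (g i) a <> 0 -> (mdeg a <= 2 * d)%nat) ->
  (forall x, in_S g m x -> gam < peval p x) ->
  forall z, sumR (seq 0 (n + m + 3)) (fun i => z i ^ 2) <> 0 ->
  0 < peval (f_gamma n m d Rad eta beta p g gam) z.
Proof.
  intros Hd Hp Hg Hdp Hdg Hgam z Hz.
  assert (Hsupp := supp_f n m d Rad eta beta p g gam Hd Hp Hg Hdp Hdg).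
  assert (Hnn : forall z, 0 <= peval (f_gamma n m d Rad eta beta p g gam) z).
  { intros w. rewrite peval_f. pose proof (sumR_sq_nonneg (seq 1 m) (fun i => peval (homog (2 * d) (n + m + 2) (g i)) w
     - w (n + i)%nat ^ 2 * w (n + m + 2)%nat ^ (2 * d - 2))). cbv beta in H.
    pose proof (pow2_ge_0 (gam * w (n + m + 2)%nat ^ (2 * d) - peval (homog (2 * d) (n + m + 2) p) w
     - w (n + 0)%nat ^ 2 * w (n + m + 2)%nat ^ (2 * d - 2))).
    pose proof (pow2_ge_0 ((Rad + sumR (seq 1 m) eta + beta + gam) ^ d * w (n + m + 2)%nat ^ (2 * d)
     - (sumR (seq 0 n) (fun i => w i ^ 2) + sumR (seq 0 (m + 1)) (fun j => w (n + j)%nat ^ 2)) ^ d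
     - w (n + (m + 1))%nat ^ (2 * d))). lra. }
  destruct (Req_dec (z (n + m + 2)%nat) 0) as [Hy|Hy].
  - rewrite peval_f, Hy. rewrite pow_i by lia. rewrite Rmult_0_r, Rminus_0_l.
    set (X := sumR (seq 0 n) (fun i => z i ^ 2) + sumR (seq 0 (m + 1)) (fun j => z (n + j)%nat ^ 2)).
    set (s := z (n + (m + 1))%nat).
    assert (HX : 0 <= X) by (unfold X; pose proof (sumR_sq_nonneg (seq 0 n) z);
      pose proof (sumR_sq_nonneg (seq 0 (m + 1)) (fun j => z (n + j)%nat)); lra).
    assert (HXd : 0 <= X ^ d) by (apply pow_le; auto).
    assert (Hs : 0 <= s ^ (2 * d)) by (rewrite pow_mult; apply pow_le, pow2_ge_0).
    assert (Hpos : 0 < X ^ d + s ^ (2 * d)).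
    { destruct (Req_dec (X ^ d + s ^ (2 * d)) 0) as [E|E]; [|lra]. exfalso. apply Hz.
      assert (X = 0) by (apply (pow_pos_zero X d); auto; lra).
      assert (s ^ 2 = 0) by (apply (pow_pos_zero (s ^ 2) d); auto; [apply pow2_ge_0|rewrite <- pow_mult; lra]).
      rewrite sumR_split_N. fold X s. rewrite Hy. lra. }
    pose proof (sumR_sq_nonneg (seq 1 m) (fun i => peval (homog (2 * d) (n + m + 2) (g i)) z
     - z (n + i)%nat ^ 2 * 0 ^ (2 * d - 2))). cbv beta in H.
    pose proof (pow2_ge_0 (gam * 0 - peval (homog (2 * d) (n + m + 2) p) z
     - z (n + 0)%nat ^ 2 * 0 ^ (2 * d - 2))).
    assert (0 < (- X ^ d - s ^ (2 * d)) ^ 2) by nra. lra.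
  - set (t := / z (n + m + 2)%nat).
    set (z' := fun i => t * z i).
    assert (Ht : t <> 0) by (apply Rinv_neq_0_compat; auto).
    assert (Esc : peval (f_gamma n m d Rad eta beta p g gam) z' = t ^ (2 * (2 * d)) * peval (f_gamma n m d Rad eta beta p g gam) z).
    { unfold z'. apply (peval_scale false (n + m + 3)); auto. }
    assert (Htp : 0 < t ^ (2 * (2 * d))) by (rewrite pow_mult; apply pow_lt; nra).
    assert (Hy1 : z' (n + m + 2)%nat = 1) by (unfold z', t; field; auto).
    assert (Hf' : 0 < peval (f_gamma n m d Rad eta beta p g gam) z').
    { destruct (Rle_lt_or_eq_dec 0 _ (Hnn z')) as [|E]; auto. exfalso.
      symmetry in E. rewrite peval_f, Hy1, !pow1, !Rmult_1_r in E.
      rewrite peval_homog_1 in E by auto.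
      rewrite (sumR_ext (seq 1 m) _ (fun i => (peval (g i) z' - z' (n + i)%nat ^ 2) ^ 2)) in E.
      2:{ intros i _. rewrite peval_homog_1 by auto. rewrite ?pow1, ?Rmult_1_r; auto. }
      set (a1 := gam - peval p z' - z' (n + 0)%nat ^ 2) in E.
      set (S2 := sumR (seq 1 m) (fun i => (peval (g i) z' - z' (n + i)%nat ^ 2) ^ 2)) in E.
      set (a3 := (Rad + sumR (seq 1 m) eta + beta + gam) ^ d -
          (sumR (seq 0 n) (fun i => z' i ^ 2) + sumR (seq 0 (m + 1)) (fun j => z' (n + j)%nat ^ 2)) ^ d -
          z' (n + (m + 1))%nat ^ (2 * d)) in E.
      assert (HS2 : 0 <= S2) by (unfold S2; apply (sumR_sq_nonneg (seq 1 m) (fun i => peval (g i) z' - z' (n + i)%nat ^ 2))).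
      pose proof (pow2_ge_0 a1). pose proof (pow2_ge_0 a3).
      assert (Ea1 : a1 = 0) by nra.
      assert (ES2 : S2 = 0) by nra.
      assert (Hin : in_S g m z').
      { intros i Hi. assert (peval (g i) z' - z' (n + i)%nat ^ 2 = 0).
        { apply (sumR_sq_zero (seq 1 m) (fun i => peval (g i) z' - z' (n + i)%nat ^ 2)); auto.
          apply in_seq; lia. }
        pose proof (pow2_ge_0 (z' (n + i)%nat)). lra. }
      specialize (Hgam z' Hin). unfold a1 in Ea1. pose proof (pow2_ge_0 (z' (n + 0)%nat)). lra. }
    rewrite Esc in Hf'. nra.
Qed.

Lemma max_sq_diff x : Rmax x 0 - Rmax (- x) 0 = x.
Proof. unfold Rmax; destruct (Rle_dec x 0), (Rle_dec (- x) 0); lra. Qed.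
Lemma max_sq_sum x : Rmax x 0 ^ 2 + Rmax (- x) 0 ^ 2 = x ^ 2.
Proof. unfold Rmax; destruct (Rle_dec x 0), (Rle_dec (- x) 0); nra. Qed.
Lemma max_abs_pos x : x <> 0 -> 0 < Rmax x 0 + Rmax (- x) 0.
Proof. unfold Rmax; destruct (Rle_dec x 0), (Rle_dec (- x) 0); intros; try lra. Qed.
Lemma max_nonneg x : 0 <= Rmax x 0.
Proof. apply Rmax_r. Qed.

Lemma pol_lower r N D q : (1 <= r)%nat -> Pol r N D q -> forall z, (exists i, (i < N)%nat /\ z i <> 0) ->
  0 <= peval q z + 1 / (2 * INR r) * (sumR (seq 0 N) (fun i => z i ^ 2)) ^ D.
Proof.
  intros Hr HP z (i0 & Hi0 & Hz0). apply Pol_unfold in HP. destruct HP as [[Hvars _] Hnn].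
  set (w := fun j => if lt_dec j N then sqrt (Rmax (z j) 0) else if lt_dec j (2 * N) then sqrt (Rmax (- z (j - N)%nat) 0) else 0).
  assert (Hw0 : forall j, 0 <= w j) by (intros j; unfold w; destruct (lt_dec j N); [apply sqrt_pos|destruct (lt_dec j (2*N)); [apply sqrt_pos|lra]]).
  assert (Hw1 : forall i, (i < N)%nat -> w i ^ 2 = Rmax (z i) 0).
  { intros i Hi. unfold w. destruct (lt_dec i N); [|lia]. apply pow2_sqrt, max_nonneg. }
  assert (Hw2 : forall i, (i < N)%nat -> w (N + i)%nat ^ 2 = Rmax (- z i) 0).
  { intros i Hi. unfold w. destruct (lt_dec (N + i) N); [lia|]. destruct (lt_dec (N + i) (2 * N)); [|lia].
    replace (N + i - N)%nat with i by lia. apply pow2_sqrt, max_nonneg. }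
  assert (H0 := peval_nonneg _ w (Hnn) Hw0). rewrite peval_pmul, peval_ppow in H0.
  change (0 <= peval (Gpoly r N D q) w * peval (Tpoly N) w ^ (r * r)) in H0.
  assert (HT : 0 < peval (Tpoly N) w).
  { unfold Tpoly, padd. rewrite peval_app, !peval_psum.
    rewrite (sumR_ext _ (fun i => peval (ppow (pvar i) 2) w) (fun i => w i ^ 2)) by (intros; rewrite peval_ppow, peval_pvar; auto).
    rewrite (sumR_ext _ (fun i => peval (ppow (pvar (N + i)) 2) w) (fun i => w (N + i)%nat ^ 2)) by (intros; rewrite peval_ppow, peval_pvar; auto).
    pose proof (term_le_sumR (seq 0 N) w i0 ltac:(apply in_seq; lia)).
    pose proof (term_le_sumR (seq 0 N) (fun i => w (N + i)%nat) i0 ltac:(apply in_seq; lia)). cbv beta in H1.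
    rewrite Hw1 in H by auto. rewrite Hw2 in H1 by auto. pose proof (max_abs_pos (z i0) Hz0). lra. }
  assert (HG : 0 <= peval (Gpoly r N D q) w).
  { assert (0 < peval (Tpoly N) w ^ (r * r)) by (apply pow_lt; auto).
    destruct (Rle_lt_dec 0 (peval (Gpoly r N D q) w)); auto. nra. }
  rewrite peval_Gpoly in HG.
  rewrite (peval_vars N q _ z) in HG; auto.
  2:{ intros i Hi. rewrite Hw1, Hw2 by auto. apply max_sq_diff. }
  rewrite (sumR_ext _ _ (fun i => z i ^ 2)) in HG; auto.
  intros i Hi; apply in_seq in Hi. replace (w i ^ 4) with ((w i ^ 2) ^ 2) by ring.
  replace (w (N + i)%nat ^ 4) with ((w (N + i)%nat ^ 2) ^ 2) by ring.
  rewrite Hw1, Hw2 by lia. apply max_sq_sum.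
Qed.

Lemma root_exists E k : (1 <= k)%nat -> 0 <= E -> exists s, s ^ k = E.
Proof.
  intros Hk HE. destruct (Req_dec E 0) as [->|HE0].
  - exists 0. apply pow_i; lia.
  - exists (Rpower E (/ INR k)). assert (HEp : 0 < E) by lra.
    assert (HkR : 0 < INR k) by (apply lt_0_INR; lia).
    rewrite <- Rpower_pow by (unfold Rpower; apply exp_pos).
    rewrite Rpower_mult. rewrite Rinv_l by lra. apply Rpower_1; auto.
Qed.

Lemma sumR_le_gen l f g : (forall i, In i l -> f i <= g i) -> sumR l f <= sumR l g.
Proof. apply sumR_le. Qed.

Lemma gamma_le n m d Rad eta beta p g gam r : (1 <= d)%nat -> (1 <= r)%nat ->
  in_vars n p -> (forall i, (1 <= i <= m)%nat -> in_vars n (g i)) ->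
  (forall x, in_S g m x -> sumR (seq 0 n) (fun i => x i ^ 2) <= Rad) ->
  (forall i x, (1 <= i <= m)%nat -> in_S g m x -> peval (g i) x <= eta i) ->
  (forall x, in_S g m x -> - peval p x <= beta) ->
  Pol r (n + m + 3) (2 * d) (qpoly r (n + m + 3) (2 * d) (f_gamma n m d Rad eta beta p g gam)) ->
  forall x, in_S g m x -> gam <= peval p x.
Proof.
  intros Hd Hr Hp Hg HRad Heta Hbeta HP x Hx.
  destruct (Rle_lt_dec gam (peval p x)) as [|Hlt]; auto. exfalso.
  set (Xs := sumR (seq 0 n) (fun i => x i ^ 2) + (gam - peval p x) + sumR (seq 1 m) (fun i => peval (g i) x)).
  set (Bc := Rad + sumR (seq 1 m) eta + beta + gam).
  assert (HgX : forall i, In i (seq 1 m) -> 0 <= peval (g i) x) by (intros i Hi; apply in_seq in Hi; apply Hx; lia).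
  assert (HX0 : 0 <= Xs).
  { unfold Xs. pose proof (sumR_sq_nonneg (seq 0 n) x).
    assert (0 <= sumR (seq 1 m) (fun i => peval (g i) x)).
    { rewrite <- (sumR_zero (seq 1 m) (fun _ => 0)) by auto. apply sumR_le; auto. }
    lra. }
  assert (HXB : Xs <= Bc).
  { unfold Xs, Bc. pose proof (HRad x Hx). pose proof (Hbeta x Hx).
    assert (sumR (seq 1 m) (fun i => peval (g i) x) <= sumR (seq 1 m) eta).
    { apply sumR_le. intros i Hi; apply in_seq in Hi; apply Heta; auto; lia. }
    lra. }
  assert (HE : 0 <= Bc ^ d - Xs ^ d) by (assert (Xs ^ d <= Bc ^ d) by (apply pow_incr; lra); lra).
  destruct (root_exists (Bc ^ d - Xs ^ d) (2 * d) ltac:(lia) HE) as [rt Hrt].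
  set (z := fun i => if lt_dec i n then x i else if Nat.eq_dec i n then sqrt (gam - peval p x)
            else if lt_dec i (n + m + 1) then sqrt (peval (g (i - n)%nat) x)
            else if Nat.eq_dec i (n + m + 1) then rt else if Nat.eq_dec i (n + m + 2) then 1 else 0).
  assert (Hzx : forall i, (i < n)%nat -> z i = x i) by (intros i Hi; unfold z; destruct (lt_dec i n); [auto|lia]).
  assert (Hzy : z (n + m + 2)%nat = 1).
  { unfold z. destruct (lt_dec (n + m + 2) n); [lia|]. destruct (Nat.eq_dec (n + m + 2) n); [lia|].
    destruct (lt_dec (n + m + 2) (n + m + 1)); [lia|]. destruct (Nat.eq_dec (n + m + 2) (n + m + 1)); [lia|].
    destruct (Nat.eq_dec (n + m + 2) (n + m + 2)); [auto|lia]. }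
  assert (Hz0 : z (n + 0)%nat = sqrt (gam - peval p x)).
  { rewrite Nat.add_0_r. unfold z. destruct (lt_dec n n); [lia|]. destruct (Nat.eq_dec n n); [auto|lia]. }
  assert (Hzi : forall i, (1 <= i <= m)%nat -> z (n + i)%nat = sqrt (peval (g i) x)).
  { intros i Hi. unfold z. destruct (lt_dec (n + i) n); [lia|]. destruct (Nat.eq_dec (n + i) n); [lia|].
    destruct (lt_dec (n + i) (n + m + 1)); [|lia]. replace (n + i - n)%nat with i by lia. auto. }
  assert (Hzr : z (n + (m + 1))%nat = rt).
  { unfold z. destruct (lt_dec (n + (m + 1)) n); [lia|]. destruct (Nat.eq_dec (n + (m + 1)) n); [lia|].
    destruct (lt_dec (n + (m + 1)) (n + m + 1)); [lia|]. destruct (Nat.eq_dec (n + (m + 1)) (n + m + 1)); [auto|lia]. }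
  assert (Hpz : peval p z = peval p x) by (apply (peval_vars n); auto).
  assert (Hgz : forall i, (1 <= i <= m)%nat -> peval (g i) z = peval (g i) x) by (intros; apply (peval_vars n); auto).
  assert (Hf0 : peval (f_gamma n m d Rad eta beta p g gam) z = 0).
  { rewrite peval_f. rewrite Hzy, !pow1, !Rmult_1_r. rewrite peval_homog_1 by auto. rewrite Hpz, Hz0.
    rewrite pow2_sqrt by lra.
    rewrite (sumR_zero (seq 1 m)).
    2:{ intros i Hi. apply in_seq in Hi. rewrite peval_homog_1 by auto. rewrite Hgz, Hzi by lia.
        rewrite ?pow1, ?Rmult_1_r, pow2_sqrt by (apply HgX, in_seq; lia). ring. }
    rewrite (sumR_ext (seq 0 n) _ (fun i => x i ^ 2)) by (intros i Hi; apply in_seq in Hi; rewrite Hzx; auto; lia).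
    replace (m + 1)%nat with (S m) by lia. change (seq 0 (S m)) with (0%nat :: seq 1 m).
    change (sumR (0%nat :: seq 1 m) (fun j => z (n + j)%nat ^ 2)) with (z (n + 0)%nat ^ 2 + sumR (seq 1 m) (fun j => z (n + j)%nat ^ 2)).
    rewrite Hz0, pow2_sqrt by lra.
    rewrite (sumR_ext (seq 1 m) (fun j => z (n + j)%nat ^ 2) (fun i => peval (g i) x)).
    2:{ intros i Hi. apply in_seq in Hi. rewrite Hzi by lia. apply pow2_sqrt, HgX, in_seq; lia. }
    replace (n + S m)%nat with (n + (m + 1))%nat by lia. rewrite Hzr, Hrt.
    fold Bc. replace (sumR (seq 0 n) (fun i => x i ^ 2) + (gam - peval p x + sumR (seq 1 m) (fun i => peval (g i) x))) with Xs
      by (unfold Xs; ring). ring. }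
  assert (Hne : exists i, (i < n + m + 3)%nat /\ z i <> 0) by (exists (n + m + 2)%nat; split; [lia|rewrite Hzy; lra]).
  assert (HL := pol_lower r _ _ _ Hr HP z Hne).
  unfold qpoly in HL. rewrite peval_psub, peval_pscale, peval_Zpoly, Hf0 in HL.
  set (Nz := sumR (seq 0 (n + m + 3)) (fun i => z i ^ 2)) in HL.
  assert (HNz : 1 <= Nz).
  { unfold Nz. pose proof (term_le_sumR (seq 0 (n + m + 3)) z (n + m + 2)%nat ltac:(apply in_seq; lia)).
    rewrite Hzy in H. lra. }
  assert (0 < Nz ^ (2 * d)) by (apply pow_lt; lra).
  assert (HrR : 0 < INR r) by (apply lt_0_INR; lia).
  assert (0 < 1 / (2 * INR r)) by (apply Rdiv_lt_0_compat; lra).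
  replace (1 / INR r) with (2 * (1 / (2 * INR r))) in HL by (field; lra). nra.
Qed.

Lemma fold_max_ge0 (h : nat -> nat) b l : (b <= fold_right (fun i acc => Nat.max (h i) acc) b l)%nat.
Proof. induction l; simpl; lia. Qed.
Lemma fold_max_ge (h : nat -> nat) b l i : In i l -> (h i <= fold_right (fun i acc => Nat.max (h i) acc) b l)%nat.
Proof. induction l; simpl; [tauto|]. intros [->|H]; [lia|]. specialize (IHl H); lia. Qed.

Lemma ER_le_trans a b c : ER_le a b -> ER_le b c -> ER_le a c.
Proof. destruct a, b, c; simpl; auto; try tauto; lra. Qed.

Lemma ER_max_l a b : ER_le a (ER_max a b).
Proof. destruct a, b; simpl; auto; try lra. apply Rmax_l. Qed.
Lemma ER_max_r a b : ER_le b (ER_max a b).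
Proof. destruct a, b; simpl; auto; try lra. apply Rmax_r. Qed.
Lemma ER_max_lub a b c : ER_le a c -> ER_le b c -> ER_le (ER_max a b) c.
Proof. destruct a, b, c; simpl; auto; try tauto. intros; apply Rmax_lub; auto. Qed.

Lemma ER_sup_le E X : (forall g, E g -> ER_le (Fin g) X) -> ER_le (ER_sup E) X.
Proof.
  intros H. unfold ER_sup. destruct (excluded_middle_informative (exists x, E x)) as [ne|ne]; [|simpl; auto].
  destruct (excluded_middle_informative (bound E)) as [b|nb].
  - destruct (completeness E b ne) as [l [Hl1 Hl2]]. simpl. destruct X as [y| |]; simpl.
    + apply Hl2. intros x Hx. specialize (H x Hx). simpl in H. auto.
    + auto.
    + destruct ne as [x Hx]. specialize (H x Hx). simpl in H. auto.
  - destruct X as [y| |]; simpl.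
    + apply nb. exists y. intros x Hx. specialize (H x Hx). simpl in H. auto.
    + auto.
    + destruct ne as [x Hx]. specialize (H x Hx). simpl in H. auto.
Qed.

Lemma ER_sup_ge E g : E g -> ER_le (Fin g) (ER_sup E).
Proof.
  intros Hg. unfold ER_sup. destruct (excluded_middle_informative (exists x, E x)) as [ne|ne].
  - destruct (excluded_middle_informative (bound E)) as [b|nb]; simpl; auto.
    destruct (completeness E b ne) as [l [Hl1 Hl2]]. simpl. apply Hl1; auto.
  - exfalso; apply ne; exists g; auto.
Qed.

Lemma m_seq_le (l : nat -> ER) X r : (forall i, (1 <= i)%nat -> ER_le (l i) X) -> ER_le (m_seq l r) X.
Proof. intros H. induction r; simpl; auto. apply ER_max_lub; auto. apply H; lia. Qed.

Lemma m_seq_ge (l : nat -> ER) r i : (1 <= i <= r)%nat -> ER_le (l i) (m_seq l r).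
Proof.
  induction r; intros Hi; [lia|]. simpl. destruct (Nat.eq_dec i (S r)) as [->|Hne].
  - apply ER_max_r.
  - eapply ER_le_trans; [apply IHr; lia|apply ER_max_l].
Qed.

Lemma pstar_cases p g m : (forall x, in_S g m x -> - peval p x <= 0 + (- peval p x)) ->
  (exists beta, forall x, in_S g m x -> - peval p x <= beta) ->
  ((~ exists x, in_S g m x) /\ pstar p g m = PInf) \/
  (exists P, pstar p g m = Fin P /\ (forall x, in_S g m x -> P <= peval p x) /\
     (forall eps, 0 < eps -> exists x, in_S g m x /\ peval p x < P + eps)).
Proof.
  intros _ [beta Hb]. unfold pstar, ER_inf, ER_sup.
  set (F := fun v => exists x, in_S g m x /\ - v = peval p x).
  destruct (excluded_middle_informative (exists x, F x)) as [ne|ne].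
  - right. destruct (excluded_middle_informative (bound F)) as [b|nb].
    + destruct (completeness F b ne) as [l [Hl1 Hl2]]. simpl. exists (- l). split; auto. split.
      * intros x Hx. assert (F (- peval p x)) by (exists x; split; auto; ring). specialize (Hl1 _ H). lra.
      * intros eps He. destruct (classic (exists x, in_S g m x /\ peval p x < - l + eps)) as [|Hn]; auto.
        exfalso. assert (l <= l - eps); [|lra]. apply Hl2. intros v [x [Hx Hv]].
        destruct (Rle_lt_dec v (l - eps)); auto. exfalso; apply Hn; exists x; split; auto; lra.
    + exfalso; apply nb. exists beta. intros v [x [Hx Hv]]. specialize (Hb x Hx). lra.
  - left. split; [|reflexivity]. intros [x Hx]. apply ne. exists (- peval p x). exists x; split; auto; ring.
Qed.

Theorem theorem4p1 (n m d : nat) (p : mpoly) (g : nat -> mpoly)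
  (Rad beta : R) (eta : nat -> R) :
  in_vars n p ->
  (forall i, (1 <= i <= m)%nat -> in_vars n (g i)) ->
  d_spec d (max_deg p g m) ->
  0 < Rad ->
  (forall x, in_S g m x -> sumR (seq 0 n) (fun i => x i ^ 2) <= Rad) ->
  (forall i x, (1 <= i <= m)%nat -> in_S g m x -> peval (g i) x <= eta i) ->
  (forall x, in_S g m x -> - peval p x <= beta) ->
  let mr := m_seq (l_seq n m d Rad eta beta p g) in
  (forall r, (1 <= r)%nat -> ER_le (mr r) (pstar p g m)) /\
  (forall r, (1 <= r)%nat -> ER_le (mr r) (mr (S r))) /\
  ER_cv mr (pstar p g m).
Proof.
  intros Hp Hg Hd HRad HRadb Heta Hbeta mr.
  destruct Hd as (Hd1 & Hd2 & _).
  assert (Hdp : forall a, coef p a <> 0 -> (mdeg a <= 2 * d)%nat).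
  { intros a Ha. pose proof (deg_ge p a Ha). pose proof (fold_max_ge0 (fun i => deg (g i)) (deg p) (seq 1 m)).
    unfold max_deg in Hd2. lia. }
  assert (Hdg : forall i a, (1 <= i <= m)%nat -> coef (g i) a <> 0 -> (mdeg a <= 2 * d)%nat).
  { intros i a Hi Ha. pose proof (deg_ge (g i) a Ha).
    pose proof (fold_max_ge (fun i => deg (g i)) (deg p) (seq 1 m) i ltac:(apply in_seq; lia)).
    unfold max_deg in Hd2. lia. }
  set (l := l_seq n m d Rad eta beta p g).
  destruct (pstar_cases p g m ltac:(intros; lra) (ex_intro _ beta Hbeta)) as [[HS Hps]|[P [Hps [HP1 HP2]]]].
  -
    assert (HB : forall gam, exists r0, forall r, (r0 <= r)%nat -> ER_le (Fin gam) (l r)).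
    { intros gam.
      set (f := f_gamma n m d Rad eta beta p g gam).
      assert (Hsf := supp_f n m d Rad eta beta p g gam Hd1 Hp Hg Hdp Hdg).
      assert (Hpos : forall z, sumR (seq 0 (n + m + 3)) (fun i => z i ^ 2) <> 0 -> 0 < peval f z).
      { apply f_pos; auto. intros x Hx. exfalso; apply HS; exists x; auto. }
      destruct (compact_bound (n + m + 3) (2 * d) f ltac:(lia) Hsf Hpos) as [c Hc].
      destruct (pol_eventually (n + m + 3) (2 * d) f ltac:(lia) ltac:(lia) Hsf (ex_intro _ c Hc)) as [r0 Hr0].
      exists r0. intros r Hr. apply ER_sup_ge. apply Hr0; auto. }
    rewrite Hps. split; [|split].
    + intros r _. destruct (mr r); simpl; auto.
    + intros r _. apply ER_max_l.
    + intros M. destruct (HB (M + 1)) as [r0 Hr0]. exists (Nat.max r0 1). intros k Hk.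
      assert (H1 : ER_le (Fin (M + 1)) (mr k)).
      { apply (ER_le_trans _ (l k)); [apply Hr0; lia|]. apply m_seq_ge. lia. }
      destruct (mr k) as [y| |]; simpl in *; try tauto.
      split; [lra|]. intro E; inversion E; lra.
      split; auto. discriminate.
  - rewrite Hps.
    assert (HA : forall r, (1 <= r)%nat -> ER_le (l r) (Fin P)).
    { intros r Hr. apply ER_sup_le. intros gam Hgam. simpl.
      assert (Hle := gamma_le n m d Rad eta beta p g gam r Hd1 Hr Hp Hg HRadb Heta Hbeta Hgam).
      destruct (Rle_lt_dec gam P) as [|Hlt]; auto. exfalso.
      destruct (HP2 (gam - P)) as [x [Hx Hpx]]; [lra|]. specialize (Hle x Hx). lra. }
    assert (HB : forall gam, gam < P -> exists r0, forall r, (r0 <= r)%nat -> ER_le (Fin gam) (l r)).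
    { intros gam Hgam.
      set (f := f_gamma n m d Rad eta beta p g gam).
      assert (Hsf := supp_f n m d Rad eta beta p g gam Hd1 Hp Hg Hdp Hdg).
      assert (Hpos : forall z, sumR (seq 0 (n + m + 3)) (fun i => z i ^ 2) <> 0 -> 0 < peval f z).
      { apply f_pos; auto. intros x Hx. specialize (HP1 x Hx). lra. }
      destruct (compact_bound (n + m + 3) (2 * d) f ltac:(lia) Hsf Hpos) as [c Hc].
      destruct (pol_eventually (n + m + 3) (2 * d) f ltac:(lia) ltac:(lia) Hsf (ex_intro _ c Hc)) as [r0 Hr0].
      exists r0. intros r Hr. apply ER_sup_ge. apply Hr0; auto. }
    assert (Hup : forall r, ER_le (mr r) (Fin P)) by (intros r; apply m_seq_le; auto).
    split; [|split].
    + intros r _. apply Hup.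
    + intros r _. apply ER_max_l.
    + intros eps He. destruct (HB (P - eps / 2)) as [r0 Hr0]; [lra|]. exists (Nat.max r0 1). intros k Hk.
      assert (H1 : ER_le (Fin (P - eps / 2)) (mr k)).
      { apply (ER_le_trans _ (l k)); [apply Hr0; lia|]. apply m_seq_ge. lia. }
      specialize (Hup k). destruct (mr k) as [y| |]; simpl in *; try tauto.
      exists y. split; auto. apply Rabs_def1; lra.
Qed.
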